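(* Let $x=[a_1,\ldots,a_t,\ldots]\in(0,1)$ be irrational, and let $q_i=q_i(x)$ denote the denominator of the $i$-th convergent $p_i/q_i=[0;a_1,\ldots,a_i]$. Then for every nonzero $\delta$ of sufficiently small absolute value there exists $t=t(x,\delta)$ such that $$\frac{g_{\varphi^{-1}}(x+\delta)-g_{\varphi^{-1}}(x)}{\delta}\ge\frac{q_tq_{t-1}}{\varphi^{S^{\varphi}_t(x)+7}},\qquad \frac{g_{\tau}(x+\delta)-g_{\tau}(x)}{\delta}\ge\frac{q_tq_{t-1}}{\varphi^{S^{\tau}_t(x)+9}}.$$
   Context: $\varphi=\frac{1+\sqrt5}2$, $\tau=\varphi^{-2}$. For irrational $x=[0;a_1,a_2,\ldots]$: $S^{\varphi}_t(x)=a_1+2a_2+a_3+2a_4+\cdots$ ($t$ terms, coefficient $1$ on odd and $2$ on even indices) and $S^{\tau}_t(x)=2a_1+a_2+2a_3+a_4+\cdots$ ($t$ terms, coefficient $2$ on odd and $1$ on even indices). For $\lambda\in(0,1)$, $g_\lambda:[0,1]\to[0,1]$ is defined by $g_\lambda(0)=0$, $g_\lambda(1)=1$, $g_\lambda\!\left(\frac{p+r}{q+s}\right)=(1-\lambda)g_\lambda(\frac pq)+\lambda g_\lambda(\frac rs)$ for consecutive Farey fractions $\frac pq<\frac rs$ at which it is already defined, and continuity; for irrational $x$, $g_{\varphi^{-1}}(x)=\sum_{i\ge1}(-1)^{i-1}\varphi^{-(S^{\varphi}_i(x)-1)}$ and $g_\tau(x)=\sum_{i\ge1}(-1)^{i-1}\varphi^{-(S^{\tau}_i(x)-2)}$.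 *)

(* Defs.v *)
From Stdlib Require Import Reals Lra Lia ZArith.
Open Scope R_scope.

Definition phi : R := (1 + sqrt 5) / 2.
Definition tau : R := / (phi ^ 2).

Definition irrational (x : R) : Prop :=
  forall (p q : Z), q <> 0%Z -> x <> IZR p / IZR q.

Definition floorZ (x : R) : Z := Int_part x.

Definition gauss (y : R) : R := / y - IZR (floorZ (/ y)).

Fixpoint gauss_iter (n : nat) (x : R) : R :=
  match n with
  | O => x
  | S n' => gauss (gauss_iter n' x)
  end.

(** Partial quotients: x = [0; a_1, a_2, ...], a_i = floor(1 / T^{i-1}(x)),
    for i >= 1 (the value at i = 0 is irrelevant). *)
Definition cf_digit (x : R) (i : nat) : nat :=
  Z.to_nat (floorZ (/ gauss_iter (i - 1) x)).

(** Denominators of convergents: q_{-1} = 0, q_0 = 1,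
    q_i = a_i q_{i-1} + q_{i-2}.  cf_qpair x n = (q_{n-1}, q_n). *)
Fixpoint cf_qpair (x : R) (n : nat) : nat * nat :=
  match n with
  | O => (0%nat, 1%nat)
  | S n' => let (qm, qc) := cf_qpair x n' in
            (qc, (cf_digit x n * qc + qm)%nat)
  end.

Definition cf_q (x : R) (n : nat) : nat := snd (cf_qpair x n).

Fixpoint S_phi (x : R) (t : nat) : nat :=
  match t with
  | O => O
  | S t' => (S_phi x t' + (if Nat.odd t then 1 else 2) * cf_digit x t)%nat
  end.

Fixpoint S_tau (x : R) (t : nat) : nat :=
  match t with
  | O => O
  | S t' => (S_tau x t' + (if Nat.odd t then 2 else 1) * cf_digit x t)%nat
  end.

(** [is_g lam g]: g agrees on [0,1] with the function g_lambda of the paper: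
    g(0)=0, g(1)=1, the Farey-mediant recursion
    g((p+r)/(q+s)) = (1-lam) g(p/q) + lam g(r/s) for consecutive Farey
    fractions p/q < r/s in [0,1] (i.e. r q - p s = 1), and continuity on [0,1]. *)
Definition is_g (lam : R) (g : R -> R) : Prop :=
  g 0 = 0 /\ g 1 = 1 /\
  (forall p q r s : nat, (0 < q)%nat -> (0 < s)%nat -> (r <= s)%nat ->
     (r * q = p * s + 1)%nat ->
     g (INR (p + r) / INR (q + s)) =
       (1 - lam) * g (INR p / INR q) + lam * g (INR r / INR s)) /\
  (forall y, 0 <= y <= 1 -> forall eps, 0 < eps -> exists d, 0 < d /\
     forall z, 0 <= z <= 1 -> Rabs (z - y) < d -> Rabs (g z - g y) < eps).

(* Main.v *)
Require Import Defs.
From Stdlib Require Import Reals Lra Lia Psatz ZArith Arith Classical.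
Open Scope R_scope.

Module P1.

Definition fr (a b : nat) : R := INR a / INR b.

Lemma fr_le (a b c d : nat) : (0<b)%nat -> (0<d)%nat -> (a*d <= c*b)%nat -> fr a b <= fr c d.
Proof.
  intros Hb Hd H. unfold fr.
  apply le_INR in H. rewrite !mult_INR in H.
  assert (0 < INR b) by (apply lt_0_INR; lia).
  assert (0 < INR d) by (apply lt_0_INR; lia).
  apply (Rmult_le_reg_r (INR b * INR d)). nra.
  replace (INR a / INR b * (INR b * INR d)) with (INR a * INR d) by (field; lra).
  replace (INR c / INR d * (INR b * INR d)) with (INR c * INR b) by (field; lra). lra.
Qed.

Lemma fr_eq (a b c d : nat) : (0<b)%nat -> (0<d)%nat -> (a*d = c*b)%nat -> fr a b = fr c d.
Proof.
  intros Hb Hd H. apply Rle_antisym; apply fr_le; lia.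
Qed.

Lemma fr_le_inv (a b c d : nat) : (0<b)%nat -> (0<d)%nat -> fr a b <= fr c d -> (a*d <= c*b)%nat.
Proof.
  intros Hb Hd H. unfold fr in H.
  assert (0 < INR b) by (apply lt_0_INR; lia).
  assert (0 < INR d) by (apply lt_0_INR; lia).
  apply INR_le. rewrite !mult_INR.
  apply (Rmult_le_compat_r (INR b * INR d)) in H; [|nra].
  replace (INR a / INR b * (INR b * INR d)) with (INR a * INR d) in H by (field; lra).
  replace (INR c / INR d * (INR b * INR d)) with (INR c * INR b) in H by (field; lra).
  exact H.
Qed.

Definition FP (p q r s : nat) : Prop := (0<q)%nat /\ (0<s)%nat /\ (r<=s)%nat /\ (r*q = p*s+1)%nat.

Lemma cross_lt a b c d r s : (0<b)%nat -> (0<d)%nat -> (a*d <= c*b)%nat -> (c*s < r*d)%nat -> (a*s < r*b)%nat.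
Proof.
  intros Hb Hd H1 H2.
  assert (H3 : (a*d*s <= c*b*s)%nat) by (apply Nat.mul_le_mono_r; lia).
  assert (H4 : (c*s*b < r*d*b)%nat) by (apply Nat.mul_lt_mono_pos_r; lia).
  assert (H5 : (a*s*d < r*b*d)%nat) by nia.
  apply (Nat.mul_lt_mono_pos_r d); lia.
Qed.

Lemma cross_lt2 a b c d r s : (0<b)%nat -> (0<d)%nat -> (0<s)%nat -> (a*d < c*b)%nat -> (c*s <= r*d)%nat -> (a*s < r*b)%nat.
Proof.
  intros Hb Hd Hs H1 H2.
  assert (H4 : (c*s*b <= r*d*b)%nat) by (apply Nat.mul_le_mono_r; lia).
  assert (H3' : (a*d*s < c*b*s)%nat) by (apply Nat.mul_lt_mono_pos_r; lia).
  assert (H5 : (a*s*d < r*b*d)%nat) by nia.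
  apply (Nat.mul_lt_mono_pos_r d); lia.
Qed.

Section Mono.
Variable lam : R.
Variable g : R -> R.
Hypothesis Hlam : 0 < lam < 1.
Hypothesis Hg0 : g 0 = 0.
Hypothesis Hg1 : g 1 = 1.
Hypothesis Hrec : forall p q r s : nat, (0 < q)%nat -> (0 < s)%nat -> (r <= s)%nat ->
     (r * q = p * s + 1)%nat ->
     g (INR (p + r) / INR (q + s)) =
       (1 - lam) * g (INR p / INR q) + lam * g (INR r / INR s).
Hypothesis Hcont : forall y, 0 <= y <= 1 -> forall eps, 0 < eps -> exists d, 0 < d /\
     forall z, 0 <= z <= 1 -> Rabs (z - y) < d -> Rabs (g z - g y) < eps.

Lemma rec_fr p q r s : FP p q r s -> g (fr (p+r)%nat (q+s)%nat) = (1-lam) * g (fr p q) + lam * g (fr r s).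
Proof. intros (?&?&?&?). unfold fr. apply Hrec; auto. Qed.

Lemma fp_le_aux : forall F p q r s, (q + s < F)%nat -> FP p q r s -> g (fr p q) <= g (fr r s).
Proof.
  induction F; intros p q r s HF H; [lia|].
  destruct H as (Hq&Hs&Hrs&Hd).
  destruct (Nat.lt_trichotomy q s) as [Hlt|[Heq|Hgt]].
  - (* r/s is mediant of p/q and (r-p)/(s-q) *)
    assert (Hpr : (p <= r)%nat) by nia.
    assert (Hx : (r - p <= s - q)%nat) by nia.
    assert (FP p q (r-p)%nat (s-q)%nat) by (repeat split; try lia; nia).
    pose proof (IHF p q (r-p)%nat (s-q)%nat ltac:(lia) H) as IH.
    pose proof (rec_fr p q (r-p)%nat (s-q)%nat H) as E.
    replace (p + (r-p))%nat with r in E by lia.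
    replace (q + (s-q))%nat with s in E by lia.
    rewrite E. nra.
  - subst s. assert (p < r)%nat by nia. assert (q = 1)%nat by nia. subst q.
    assert (p = 0)%nat by lia. assert (r = 1)%nat by lia. subst. unfold fr. replace (INR 0 / INR 1) with 0 by (simpl; field). replace (INR 1 / INR 1) with 1 by (simpl; field). lra.
  - assert (Hpr : (r <= p)%nat) by nia.
    assert (FP (p-r)%nat (q-s)%nat r s) by (repeat split; try lia; nia).
    pose proof (IHF (p-r)%nat (q-s)%nat r s ltac:(lia) H) as IH.
    pose proof (rec_fr (p-r)%nat (q-s)%nat r s H) as E.
    replace (p - r + r)%nat with p in E by lia.
    replace (q - s + s)%nat with q in E by lia.
    rewrite E. nra.
Qed.

Lemma fp_le p q r s : FP p q r s -> g (fr p q) <= g (fr r s).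
Proof. intros H. apply (fp_le_aux (S (q+s)%nat)); auto. Qed.

Lemma fp_children p q r s : FP p q r s -> FP p q (p+r) (q+s) /\ FP (p+r) (q+s) r s.
Proof.
  intros (Hq&Hs&Hrs&Hd).
  assert (p < q)%nat by nia.
  split; repeat split; try lia; nia.
Qed.

Lemma contain_aux : forall F p q r s a b, (b < F + q + s)%nat -> FP p q r s -> (0 < b)%nat ->
  (p * b <= a * q)%nat -> (a * s <= r * b)%nat ->
  g (fr p q) <= g (fr a b) /\ g (fr a b) <= g (fr r s).
Proof.
  induction F; intros p q r s a b HF H Hb H1 H2;
  pose proof (fp_le _ _ _ _ H) as Hle; destruct H as (Hq&Hs&Hrs&Hd).
  - destruct (Nat.eq_dec (p*b)%nat (a*q)%nat) as [E|E].
    { rewrite <- (fr_eq p q a b) by lia. split; lra. }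
    destruct (Nat.eq_dec (a*s)%nat (r*b)%nat) as [E'|E'].
    { rewrite (fr_eq a b r s) by lia. split; lra. }
    exfalso. nia.
  - destruct (Nat.eq_dec (p*b)%nat (a*q)%nat) as [E|E].
    { rewrite <- (fr_eq p q a b) by lia. split; lra. }
    destruct (Nat.eq_dec (a*s)%nat (r*b)%nat) as [E'|E'].
    { rewrite (fr_eq a b r s) by lia. split; lra. }
    assert (Hbig : (q + s <= b)%nat) by nia.
    assert (HFP : FP p q r s) by (repeat split; auto).
    destruct (fp_children _ _ _ _ HFP) as [HL HR].
    pose proof (fp_le _ _ _ _ HL). pose proof (fp_le _ _ _ _ HR).
    destruct (le_lt_dec (a*(q+s))%nat ((p+r)*b)%nat) as [C|C].
    + assert (IH := IHF p q (p+r)%nat (q+s)%nat a b ltac:(lia) HL Hb H1 C). split; lra.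
    + assert (IH := IHF (p+r)%nat (q+s)%nat r s a b ltac:(lia) HR Hb ltac:(lia) H2). split; lra.
Qed.

Lemma contain p q r s a b : FP p q r s -> (0 < b)%nat ->
  (p * b <= a * q)%nat -> (a * s <= r * b)%nat ->
  g (fr p q) <= g (fr a b) /\ g (fr a b) <= g (fr r s).
Proof. intros. apply (contain_aux (S b)); auto; lia. Qed.

Lemma mono2_aux : forall F p q r s a b c d, (b + d < F + 2*(q + s))%nat -> FP p q r s ->
  (0 < b)%nat -> (0 < d)%nat ->
  (p * b <= a * q)%nat -> (a * d <= c * b)%nat -> (c * s <= r * d)%nat ->
  g (fr a b) <= g (fr c d).
Proof.
  induction F; intros p q r s a b c d HF H Hb Hd H1 H2 H3;
  pose proof (fp_le _ _ _ _ H) as Hle; pose proof H as HFP; destruct H as (Hq&Hs&Hrs&Hdt).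
  - destruct (Nat.eq_dec (p*b)%nat (a*q)%nat) as [E|E].
    { rewrite (fr_eq a b p q) by lia.
      apply (contain p q r s c d); auto; nia. }
    destruct (Nat.eq_dec (c*s)%nat (r*d)%nat) as [E'|E'].
    { rewrite (fr_eq c d r s) by lia.
      apply (contain p q r s a b); auto; nia. }
    exfalso. assert (a*s < r*b)%nat by (apply (cross_lt a b c d r s); lia). assert (p*d < c*q)%nat by (apply (cross_lt2 p q a b c d); lia). assert (q + s <= b)%nat by nia. assert (q+s <= d)%nat by nia. lia.
  - destruct (Nat.eq_dec (p*b)%nat (a*q)%nat) as [E|E].
    { rewrite (fr_eq a b p q) by lia.
      apply (contain p q r s c d); auto; nia. }
    destruct (Nat.eq_dec (c*s)%nat (r*d)%nat) as [E'|E'].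
    { rewrite (fr_eq c d r s) by lia.
      apply (contain p q r s a b); auto; nia. }
    assert (a*s < r*b)%nat by (apply (cross_lt a b c d r s); lia). assert (p*d < c*q)%nat by (apply (cross_lt2 p q a b c d); lia). assert (q + s <= b)%nat by nia. assert (q+s <= d)%nat by nia.
    destruct (fp_children _ _ _ _ HFP) as [HL HR].
    destruct (le_lt_dec (a*(q+s))%nat ((p+r)*b)%nat) as [C|C];
    destruct (le_lt_dec (c*(q+s))%nat ((p+r)*d)%nat) as [C'|C'].
    + apply (IHF p q (p+r)%nat (q+s)%nat a b c d); auto; lia.
    + pose proof (contain _ _ _ _ a b HL Hb H1 C).
      pose proof (contain _ _ _ _ c d HR Hd ltac:(lia) H3). lra.
    + exfalso. nia.
    + apply (IHF (p+r)%nat (q+s)%nat r s a b c d); auto; lia.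
Qed.

Lemma mono_rat a b c d : (0 < b)%nat -> (0 < d)%nat -> (a <= b)%nat -> (c <= d)%nat ->
  fr a b <= fr c d -> g (fr a b) <= g (fr c d).
Proof.
  intros Hb Hd Hab Hcd H. apply fr_le_inv in H; auto.
  apply (mono2_aux (S (b+d)) 0 1 1 1); try lia.
  repeat split; lia.
Qed.

Lemma rat_between lo hi : 0 <= lo < hi -> exists k n : nat, (0 < n)%nat /\ lo < fr k n < hi.
Proof.
  intros [H0 H1].
  destruct (archimed (/ (hi - lo))) as [Hu _].
  assert (Hpos : 0 < / (hi - lo)) by (apply Rinv_0_lt_compat; lra).
  set (n := Z.to_nat (up (/ (hi - lo)))).
  assert (Hn : INR n = IZR (up (/ (hi-lo)))).
  { unfold n. rewrite INR_IZR_INZ, Z2Nat.id; auto. apply le_IZR. lra. }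
  assert (Hn0 : 0 < INR n) by lra.
  assert (Hn1 : (0 < n)%nat) by (apply INR_lt; simpl; lra).
  set (z := lo * INR n).
  assert (Hz : 0 <= z) by (unfold z; nra).
  destruct (archimed z) as [Hz1 Hz2].
  set (k := Z.to_nat (up z)).
  assert (Hk : INR k = IZR (up z)).
  { unfold k. rewrite INR_IZR_INZ, Z2Nat.id; auto. apply le_IZR. lra. }
  exists k, n. split; auto. unfold fr. rewrite Hk.
  assert (Hd : (hi - lo) * INR n > 1).
  { rewrite Hn. apply (Rmult_lt_compat_l (hi-lo)) in Hu; [|lra].
    rewrite Rinv_r in Hu; lra. }
  split.
  - apply (Rmult_lt_reg_r (INR n)); auto.
    replace (IZR (up z) / INR n * INR n) with (IZR (up z)) by (field; lra). unfold z in *. lra.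
  - apply (Rmult_lt_reg_r (INR n)); auto.
    replace (IZR (up z) / INR n * INR n) with (IZR (up z)) by (field; lra).
    unfold z in *. lra.
Qed.

Lemma g_mono z1 z2 : 0 <= z1 -> z1 <= z2 -> z2 <= 1 -> g z1 <= g z2.
Proof.
  intros H0 H12 H1.
  destruct (Req_dec z1 z2) as [E|E]; [subst; lra|].
  apply Rnot_lt_le. intro Hc.
  set (eps := (g z1 - g z2) / 2).
  assert (He : 0 < eps) by (unfold eps; lra).
  destruct (Hcont z1 ltac:(lra) eps He) as (d1 & Hd1 & C1).
  destruct (Hcont z2 ltac:(lra) eps He) as (d2 & Hd2 & C2).
  set (m := Rmin ((z2 - z1)/2) (Rmin d1 d2)).
  assert (Hm : 0 < m).
  { unfold m. apply Rmin_glb_lt; [lra|]. apply Rmin_glb_lt; lra. }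
  assert (Hm1 : m <= (z2-z1)/2) by apply Rmin_l.
  assert (Hm2 : m <= d1) by (eapply Rle_trans; [apply Rmin_r|apply Rmin_l]).
  assert (Hm3 : m <= d2) by (eapply Rle_trans; [apply Rmin_r|apply Rmin_r]).
  destruct (rat_between z1 (z1 + m) ltac:(lra)) as (a & b & Hb & Ha1 & Ha2).
  destruct (rat_between (z2 - m) z2 ltac:(lra)) as (c & d & Hd & Hc1 & Hc2).
  assert (Hab : (a <= b)%nat).
  { assert (fr a b <= fr 1 1) by (replace (fr 1 1) with 1 by (unfold fr; simpl; field); lra).
    apply fr_le_inv in H; lia. }
  assert (Hcd : (c <= d)%nat).
  { assert (fr c d <= fr 1 1) by (replace (fr 1 1) with 1 by (unfold fr; simpl; field); lra).
    apply fr_le_inv in H; lia. }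
  assert (Hmono := mono_rat a b c d Hb Hd Hab Hcd ltac:(lra)).
  assert (A1 := C1 (fr a b) ltac:(lra) ltac:(apply Rabs_def1; lra)).
  assert (A2 := C2 (fr c d) ltac:(lra) ltac:(apply Rabs_def1; lra)).
  apply Rabs_def2 in A1. apply Rabs_def2 in A2. unfold eps in *. lra.
Qed.

End Mono.

End P1.
Import P1.

Module P2.

Fixpoint cf_ppair (x : R) (n : nat) : nat * nat :=
  match n with
  | O => (1%nat, 0%nat)
  | S n' => let (pm, pc) := cf_ppair x n' in
            (pc, (cf_digit x n * pc + pm)%nat)
  end.

Definition pn x n := snd (cf_ppair x n).
Definition pm x n := fst (cf_ppair x n).
Definition qn x n := snd (cf_qpair x n).
Definition qm x n := fst (cf_qpair x n).
Definition dg x n := cf_digit x (S n).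

Lemma pm_S x n : pm x (S n) = pn x n.
Proof. unfold pm, pn. simpl. destruct (cf_ppair x n). reflexivity. Qed.
Lemma pn_S x n : pn x (S n) = (dg x n * pn x n + pm x n)%nat.
Proof. unfold pm, pn, dg. simpl. destruct (cf_ppair x n). reflexivity. Qed.
Lemma qm_S x n : qm x (S n) = qn x n.
Proof. unfold qm, qn. simpl. destruct (cf_qpair x n). reflexivity. Qed.
Lemma qn_S x n : qn x (S n) = (dg x n * qn x n + qm x n)%nat.
Proof. unfold qm, qn, dg. simpl. destruct (cf_qpair x n). reflexivity. Qed.
Lemma pn0 x : pn x 0 = 0%nat. Proof. reflexivity. Qed.
Lemma pm0 x : pm x 0 = 1%nat. Proof. reflexivity. Qed.
Lemma qn0 x : qn x 0 = 1%nat. Proof. reflexivity. Qed.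
Lemma qm0 x : qm x 0 = 0%nat. Proof. reflexivity. Qed.

Lemma cf_q_eq x n : cf_q x n = qn x n.
Proof. reflexivity. Qed.
Lemma cf_q_pred x n : cf_q x (S n - 1) = qm x (S n).
Proof. rewrite qm_S. replace (S n - 1)%nat with n by lia. reflexivity. Qed.

Definition irrational' := irrational.

Lemma irr_neq0 y : irrational y -> y <> 0.
Proof. intros H E. apply (H 0%Z 1%Z); [lia|]. rewrite E. simpl. field. Qed.

Lemma irr_inv y : irrational y -> irrational (/ y).
Proof.
  intros H p q Hq E.
  assert (Hy : y <> 0) by (apply irr_neq0; auto).
  assert (Hp : p <> 0%Z).
  { intro; subst. simpl in E. unfold Rdiv in E. rewrite Rmult_0_l in E.
    exact (Rinv_neq_0_compat y Hy E). }
  apply (H q p Hp).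
  assert (IZR q <> 0) by (apply not_0_IZR; auto).
  assert (IZR p <> 0) by (apply not_0_IZR; auto).
  rewrite <- (Rinv_inv y), E. field; auto.
Qed.

Lemma irr_sub y k : irrational y -> irrational (y - IZR k).
Proof.
  intros H p q Hq E. apply (H (p + k * q)%Z q Hq).
  assert (IZR q <> 0) by (apply not_0_IZR; auto).
  rewrite plus_IZR, mult_IZR. replace y with (y - IZR k + IZR k) by ring. rewrite E. field; auto.
Qed.

Section CF.
Variable x : R.
Hypothesis Hx : 0 < x < 1.
Hypothesis Hirr : irrational x.

Definition u n := gauss_iter n x.

Lemma u_props n : 0 < u n < 1 /\ irrational (u n).
Proof.
  induction n.
  - simpl. auto.
  - destruct IHn as [[H0 H1] Hi].
    unfold u; simpl; fold (u n). unfold gauss, floorZ.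
    split.
    + pose proof (base_Int_part (/ u n)) as [B1 B2].
      assert (Hne : / u n - IZR (Int_part (/ u n)) <> 0).
      { intro E. apply (irr_sub (/u n) (Int_part (/ u n)) (irr_inv _ Hi) 0%Z 1%Z); [lia|].
        rewrite E. simpl. field. }
      lra.
    + apply irr_sub, irr_inv; auto.
Qed.

Lemma u_pos n : 0 < u n. Proof. apply u_props. Qed.
Lemma u_lt1 n : u n < 1. Proof. apply u_props. Qed.

Lemma dg_real n : INR (dg x n) = IZR (Int_part (/ u n)) /\ u (S n) = / u n - INR (dg x n).
Proof.
  pose proof (u_props n) as [[H0 H1] _].
  pose proof (base_Int_part (/ u n)) as [B1 B2].
  assert (Hg : 1 < / u n).
  { rewrite <- Rinv_1. apply Rinv_lt_contravar; lra. }
  assert (Hf : (0 <= Int_part (/ u n))%Z) by (apply le_IZR; simpl; lra).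
  assert (E : INR (dg x n) = IZR (Int_part (/ u n))).
  { unfold dg, cf_digit. replace (S n - 1)%nat with n by lia. fold (u n).
    unfold floorZ. rewrite INR_IZR_INZ, Z2Nat.id; auto. }
  split; auto.
  unfold u at 1; simpl; fold (u n). unfold gauss, floorZ. rewrite E. reflexivity.
Qed.

Lemma dg_bounds n : (1 <= dg x n)%nat /\ INR (dg x n) < / u n < INR (dg x n) + 1.
Proof.
  pose proof (u_props n) as [[H0 H1] _].
  pose proof (u_props (S n)) as [[H2 H3] _].
  destruct (dg_real n) as [E1 E2].
  assert (Hg : 1 < / u n).
  { rewrite <- Rinv_1. apply Rinv_lt_contravar; lra. }
  split; [|lra].
  assert (1 <= INR (dg x n)).
  { rewrite E1. pose proof (base_Int_part (/ u n)) as [B1 B2].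
    assert (IZR (Int_part (/u n)) > 0) by lra.
    apply IZR_le. apply lt_IZR in H. lia. }
  apply INR_le. simpl. lra.
Qed.

Definition P n := INR (pn x n).
Definition Pm n := INR (pm x n).
Definition Q n := INR (qn x n).
Definition Qm n := INR (qm x n).

Definition h n w := (P n + Pm n * w) / (Q n + Qm n * w).

Definition epsn (n : nat) : R := if Nat.even n then 1 else -1.

Lemma det_nat n : (Nat.even n = true -> (pm x n * qn x n = pn x n * qm x n + 1)%nat) /\
                  (Nat.even n = false -> (pn x n * qm x n = pm x n * qn x n + 1)%nat).
Proof.
  induction n.
  - simpl. split; intros; [reflexivity|discriminate].
  - rewrite pm_S, qm_S, pn_S, qn_S. rewrite Nat.even_succ, <- Nat.negb_even.
    destruct (Nat.even n) eqn:E; simpl; destruct IHn as [I1 I2]; split; intro H; try discriminate.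
    + specialize (I1 eq_refl). nia.
    + specialize (I2 eq_refl). nia.
Qed.

Lemma det_real n : Pm n * Q n - P n * Qm n = epsn n.
Proof.
  unfold Pm, Q, P, Qm, epsn. destruct (det_nat n) as [D1 D2].
  destruct (Nat.even n) eqn:E.
  - specialize (D1 eq_refl). rewrite <- !mult_INR, D1, plus_INR, mult_INR. simpl. ring.
  - specialize (D2 eq_refl). rewrite <- !mult_INR, D2, plus_INR, mult_INR. simpl. ring.
Qed.

Lemma q_facts n : (1 <= qn x n)%nat /\ (qm x n <= qn x n)%nat /\ (pn x n <= qn x n)%nat /\
   (pm x n + pn x n <= qm x n + qn x n)%nat /\ (n <= qn x n)%nat /\
   (0 < n -> 1 <= qm x n /\ pm x n <= pn x n /\ pm x n <= qm x n)%nat.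
Proof.
  induction n.
  - cbn. repeat split; lia.
  - rewrite pm_S, qm_S, pn_S, qn_S.
    pose proof (proj1 (dg_bounds n)) as Ha.
    destruct IHn as (I1&I2&I3&I4&I5&I6).
    destruct n.
    + cbn in *. repeat split; try nia.
    + specialize (I6 ltac:(lia)). repeat split; try nia.
Qed.

Lemma Q_pos n : 0 < Q n.
Proof. unfold Q. apply lt_0_INR. destruct (q_facts n) as [H _]. lia. Qed.

Lemma den_pos n w : 0 <= w -> 0 < Q n + Qm n * w.
Proof.
  intros Hw. pose proof (Q_pos n). assert (0 <= Qm n) by apply pos_INR. nra.
Qed.

Lemma h_diff n w1 w2 : Q n + Qm n * w1 <> 0 -> Q n + Qm n * w2 <> 0 ->
  h n w2 - h n w1 = epsn n * (w2 - w1) / ((Q n + Qm n * w1) * (Q n + Qm n * w2)).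
Proof.
  intros H1 H2. rewrite <- det_real. unfold h. field. auto.
Qed.

Lemma h_S n z : 0 <= z -> h (S n) z = h n (/ (INR (dg x n) + z)).
Proof.
  intros Hz. pose proof (dg_bounds n) as [Ha _].
  assert (1 <= INR (dg x n)) by (apply (le_INR 1); lia).
  unfold h, P, Pm, Q, Qm. rewrite pm_S, qm_S, pn_S, qn_S. rewrite !plus_INR, !mult_INR.
  fold (P n) (Pm n) (Q n) (Qm n).
  assert (0 <= Qm n) by apply pos_INR. pose proof (Q_pos n).
  field. split; try lra. nra.
Qed.

Lemma x_h n : x = h n (u n).
Proof.
  induction n.
  - unfold h, P, Pm, Q, Qm. rewrite pn0, pm0, qn0, qm0. simpl. unfold u. simpl. field.
  - rewrite IHn. rewrite h_S by (left; apply u_pos).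
    destruct (dg_real n) as [_ E]. rewrite E.
    pose proof (u_pos n). f_equal. replace (INR (dg x n) + (/ u n - INR (dg x n))) with (/ u n) by ring.
    rewrite Rinv_inv. reflexivity.
Qed.

End CF.

End P2.
Import P2.

Module P3.

Section Chain.
Variable lam : R.
Variable g : R -> R.
Hypothesis Hlam : 0 < lam < 1.
Hypothesis Hrec : forall p q r s : nat, (0 < q)%nat -> (0 < s)%nat -> (r <= s)%nat ->
     (r * q = p * s + 1)%nat ->
     g (INR (p + r) / INR (q + s)) =
       (1 - lam) * g (INR p / INR q) + lam * g (INR r / INR s).

Lemma chain pu qu pv qv f : (pu <= qu)%nat -> (pv <= qv)%nat -> (0 < qu)%nat -> (0 < qv)%nat ->
  (((pv*qu = pu*qv+1)%nat /\ f = lam) \/ ((pu*qv = pv*qu+1)%nat /\ f = 1 - lam)) ->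
  forall i, g (fr (i*pu+pv) (i*qu+qv)) - g (fr pu qu) = (g (fr pv qv) - g (fr pu qu)) * f ^ i.
Proof.
  intros H1 H2 H3 H4 Hor i. induction i.
  - simpl. ring.
  - rewrite <- tech_pow_Rmult.
    replace ((g (fr pv qv) - g (fr pu qu)) * (f * f ^ i)) with (f * ((g (fr pv qv) - g (fr pu qu)) * f ^ i)) by ring.
    rewrite <- IHi.
    destruct Hor as [[D ->]|[D ->]].
    + pose proof (Hrec pu qu (i*pu+pv)%nat (i*qu+qv)%nat H3 ltac:(lia) ltac:(nia) ltac:(nia)) as E.
      replace (pu + (i*pu+pv))%nat with (S i * pu + pv)%nat in E by lia.
      replace (qu + (i*qu+qv))%nat with (S i * qu + qv)%nat in E by lia.
      unfold fr in *. rewrite E. ring.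
    + pose proof (Hrec (i*pu+pv)%nat (i*qu+qv)%nat pu qu ltac:(lia) H3 H1 ltac:(nia)) as E.
      replace (i*pu+pv + pu)%nat with (S i * pu + pv)%nat in E by lia.
      replace (i*qu+qv + qu)%nat with (S i * qu + qv)%nat in E by lia.
      unfold fr in *. rewrite E. ring.
Qed.

Variable x : R.
Hypothesis Hx : 0 < x < 1.
Hypothesis Hirr : irrational x.

Definition alpha n := if Nat.even n then lam else 1 - lam.
Definition sigma n := g (h x n 1) - g (h x n 0).
Definition M n := Rabs (sigma n).

Lemma h0_fr n : h x n 0 = fr (pn x n) (qn x n).
Proof. unfold h, fr, P, Pm, Q, Qm. field. apply Rgt_not_eq, (Q_pos x Hx Hirr). Qed.

Lemma hk_fr n k : (1 <= k)%nat -> h x n (/ INR k) = fr (k * pn x n + pm x n) (k * qn x n + qm x n).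
Proof.
  intros Hk. assert (1 <= INR k) by (apply (le_INR 1); lia).
  pose proof (Q_pos x Hx Hirr n). assert (0 <= Qm x n) by apply pos_INR.
  unfold h, fr, P, Pm, Q, Qm in *. rewrite !plus_INR, !mult_INR. field. split; nra.
Qed.

Lemma chain_i n k : (1 <= k)%nat ->
  g (h x n (/ INR k)) - g (h x n 0) = sigma n * alpha n ^ (k - 1).
Proof.
  intros Hk. destruct (q_facts x Hx Hirr n) as (Q1&Q2&Q3&Q4&_).
  rewrite hk_fr, h0_fr by auto.
  pose proof (chain (pn x n) (qn x n) (pn x n + pm x n) (qn x n + qm x n) (alpha n)
     Q3 ltac:(lia) ltac:(lia) ltac:(lia)) as C.
  destruct (det_nat x n) as [D1 D2].
  unfold sigma, alpha in *.
  assert (E1 : h x n 1 = fr (pn x n + pm x n) (qn x n + qm x n)).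
  { replace 1 with (/ INR 1) by (simpl; field). rewrite hk_fr by lia. f_equal; lia. }
  rewrite E1, h0_fr.
  destruct (Nat.even n) eqn:E.
  - assert (Hd : ((pn x n + pm x n) * qn x n = pn x n * (qn x n + qm x n) + 1)%nat) by (specialize (D1 eq_refl); nia).
    specialize (C (or_introl (conj Hd eq_refl)) (k-1)%nat).
    replace ((k - 1) * pn x n + (pn x n + pm x n))%nat with (k * pn x n + pm x n)%nat in C by nia.
    replace ((k - 1) * qn x n + (qn x n + qm x n))%nat with (k * qn x n + qm x n)%nat in C by nia.
    exact C.
  - assert (Hd : (pn x n * (qn x n + qm x n) = (pn x n + pm x n) * qn x n + 1)%nat) by (specialize (D2 eq_refl); nia).
    specialize (C (or_intror (conj Hd eq_refl)) (k-1)%nat).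
    replace ((k - 1) * pn x n + (pn x n + pm x n))%nat with (k * pn x n + pm x n)%nat in C by nia.
    replace ((k - 1) * qn x n + (qn x n + qm x n))%nat with (k * qn x n + qm x n)%nat in C by nia.
    exact C.
Qed.

Lemma sigma_S n : sigma (S n) = - sigma n * alpha n ^ (dg x n - 1) * (1 - alpha n).
Proof.
  pose proof (dg_bounds x Hx Hirr n) as [Ha _].
  assert (E1 : sigma (S n) = g (h x n (/ INR (dg x n + 1))) - g (h x n (/ INR (dg x n)))).
  { unfold sigma. rewrite !(h_S x Hx Hirr) by lra.
    replace (INR (dg x n) + 1) with (INR (dg x n + 1)) by (rewrite plus_INR; simpl; ring).
    replace (INR (dg x n) + 0) with (INR (dg x n)) by ring. reflexivity. }
  rewrite E1.
  replace (g (h x n (/ INR (dg x n + 1))) - g (h x n (/ INR (dg x n)))) with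
    ((g (h x n (/ INR (dg x n + 1))) - g (h x n 0)) - (g (h x n (/ INR (dg x n))) - g (h x n 0))) by ring.
  rewrite !chain_i by lia.
  replace (dg x n + 1 - 1)%nat with (S (dg x n - 1)) by lia. rewrite <- tech_pow_Rmult. ring.
Qed.

Lemma sigma0 : g 0 = 0 -> g 1 = 1 -> sigma 0 = 1.
Proof.
  intros G0 G1. unfold sigma, h, P, Pm, Q, Qm. rewrite pn0, pm0, qn0, qm0. simpl.
  replace ((0 + 1 * 1) / (1 + 0 * 1)) with 1 by field.
  replace ((0 + 1 * 0) / (1 + 0 * 0)) with 0 by field. lra.
Qed.

Lemma M_S n : M (S n) = M n * alpha n ^ (dg x n - 1) * (1 - alpha n).
Proof.
  unfold M. rewrite sigma_S.
  assert (0 < alpha n < 1) by (unfold alpha; destruct (Nat.even n); lra).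
  rewrite !Rabs_mult, Rabs_Ropp. rewrite (Rabs_pos_eq (alpha n ^ _)) by (apply pow_le; lra).
  rewrite (Rabs_pos_eq (1 - alpha n)) by lra. reflexivity.
Qed.

Lemma chain_ii m pv qv : (1 <= m)%nat -> (pv + pm x m = pn x m)%nat -> (qv + qm x m = qn x m)%nat ->
  (pv <= qv)%nat -> (1 <= qv)%nat ->
  (forall j, g (h x m (- / INR (S j))) - g (h x m 0) = (g (h x m (-1)) - g (h x m 0)) * (1 - alpha m) ^ j)
  /\ (g (h x m (-1)) - g (h x m 0)) * (1 - alpha m) = - sigma m.
Proof.
  intros Hm E1 E2 Hpq Hq.
  destruct (q_facts x Hx Hirr m) as (Q1&Q2&Q3&Q4&_&Q6). specialize (Q6 ltac:(lia)) as (Q7&Q8&Q9).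
  destruct (det_nat x m) as [D1 D2].
  assert (Hpv : INR pv = P x m - Pm x m) by (unfold P, Pm; rewrite <- E1, plus_INR; ring).
  assert (Hqv : INR qv = Q x m - Qm x m) by (unfold Q, Qm; rewrite <- E2, plus_INR; ring).
  assert (Hqv0 : 0 < Q x m - Qm x m) by (rewrite <- Hqv; apply lt_0_INR; lia).
  assert (Hb : h x m (-1) = fr pv qv).
  { unfold fr, h. rewrite Hpv, Hqv. field. lra. }
  assert (Hj : forall j, h x m (- / INR (S j)) = fr (j * pn x m + pv) (j * qn x m + qv)).
  { intro j. unfold fr, h. rewrite !plus_INR, !mult_INR, Hpv, Hqv. fold (P x m) (Q x m).
    assert (0 <= Qm x m) by apply pos_INR.
    assert (1 <= INR (S j)) by (apply (le_INR 1); lia).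
    rewrite S_INR in *.
    field. split; [|lra]. assert (0 <= INR j) by apply pos_INR. nra. }
  assert (Hf : ((pv*qn x m = pn x m*qv+1)%nat /\ 1 - alpha m = lam) \/
               ((pn x m*qv = pv*qn x m+1)%nat /\ 1 - alpha m = 1 - lam)).
  { unfold alpha. destruct (Nat.even m).
    - right. split; [|ring]. specialize (D1 eq_refl). nia.
    - left. split; [|ring]. specialize (D2 eq_refl). nia. }
  assert (Hf' : ((pv*qm x m = pm x m*qv+1)%nat /\ 1 - alpha m = lam) \/
               ((pm x m*qv = pv*qm x m+1)%nat /\ 1 - alpha m = 1 - lam)).
  { unfold alpha. destruct (Nat.even m).
    - right. split; [|ring]. specialize (D1 eq_refl). nia.
    - left. split; [|ring]. specialize (D2 eq_refl). nia. }
  assert (Hf'' : ((pn x m*qm x m = pm x m*qn x m+1)%nat /\ 1 - alpha m = lam) \/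
               ((pm x m*qn x m = pn x m*qm x m+1)%nat /\ 1 - alpha m = 1 - lam)).
  { unfold alpha. destruct (Nat.even m).
    - right. split; [|ring]. specialize (D1 eq_refl). nia.
    - left. split; [|ring]. specialize (D2 eq_refl). nia. }
  split.
  - intro j. rewrite Hj, Hb, h0_fr.
    apply (chain _ _ _ _ _ Q3 Hpq ltac:(lia) ltac:(lia) Hf).
  - pose proof (chain _ _ _ _ _ Q9 Hpq ltac:(lia) ltac:(lia) Hf' 1) as C1.
    pose proof (chain _ _ _ _ _ Q9 Q3 ltac:(lia) ltac:(lia) Hf'' 1) as C2.
    replace (1 * pm x m + pv)%nat with (pn x m) in C1 by lia.
    replace (1 * qm x m + qv)%nat with (qn x m) in C1 by lia.
    assert (E3 : h x m 1 = fr (1 * pm x m + pn x m) (1 * qm x m + qn x m)).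
    { unfold fr, h, P, Pm, Q, Qm. rewrite !plus_INR, !mult_INR. simpl. field.
      pose proof (Q_pos x Hx Hirr m). unfold Q in *. assert (0 <= INR (qm x m)) by apply pos_INR. lra. }
    unfold sigma. rewrite E3, Hb, h0_fr.
    rewrite pow_1 in C1, C2.
    set (A := g (fr (pm x m) (qm x m))) in *.
    set (Bv := g (fr pv qv)) in *.
    set (E := g (fr (pn x m) (qn x m))) in *.
    assert (E - A = (Bv - A) * (1 - alpha m)) by lra.
    assert (g (fr (1 * pm x m + pn x m) (1 * qm x m + qn x m)) - A = (E - A) * (1 - alpha m)) by lra.
    nra.
Qed.

End Chain.

End P3.
Import P3.

Module P5.

Lemma sqrt5_bounds : 2.236 < sqrt 5 < 2.2361.
Proof.
  split.
  - apply Rsqr_incrst_0; try lra. rewrite Rsqr_sqrt by lra. unfold Rsqr. lra.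
    apply sqrt_pos.
  - apply Rsqr_incrst_0; try lra. rewrite Rsqr_sqrt by lra. unfold Rsqr. lra.
    apply sqrt_pos.
Qed.

Lemma phi_bounds : 1.618 < phi < 1.61805.
Proof. unfold phi. pose proof sqrt5_bounds. lra. Qed.

Lemma phi_sq : phi ^ 2 = phi + 1.
Proof.
  unfold phi. simpl. rewrite Rmult_1_r.
  replace ((1 + sqrt 5) / 2 * ((1 + sqrt 5) / 2)) with ((1 + 2 * sqrt 5 + sqrt 5 * sqrt 5)/4) by field.
  rewrite sqrt_sqrt by lra. field.
Qed.

Definition r1 := / phi.
Definition r2 := / phi ^ 2.

Lemma r_sum : r1 + r2 = 1.
Proof.
  unfold r1, r2. pose proof phi_bounds. pose proof phi_sq.
  field_simplify; try lra. rewrite H0. field. lra.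
Qed.

Lemma r1_val : 0 < r1 < 0.625.
Proof. unfold r1. pose proof phi_bounds. split. apply Rinv_0_lt_compat; lra.
  apply (Rmult_lt_reg_r phi); [lra|]. rewrite Rinv_l by lra. lra. Qed.
Lemma r2_val : 0.375 < r2 < 0.4.
Proof. pose proof r_sum. pose proof r1_val. pose proof phi_bounds.
  split; [lra|]. unfold r2. rewrite phi_sq. apply (Rmult_lt_reg_r (phi+1)); [lra|].
  rewrite Rinv_l by lra. lra. Qed.

Lemma phi_pow_pos k : 0 < phi ^ k.
Proof. apply pow_lt. pose proof phi_bounds. lra. Qed.

Lemma phi_pow_lin d : 1 + INR d / 2 <= phi ^ d.
Proof.
  pose proof phi_bounds. induction d.
  - simpl. lra.
  - rewrite S_INR. simpl. assert (0 <= INR d) by apply pos_INR. nra.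
Qed.

Lemma phi5 : 11.08 <= phi ^ 5.
Proof. pose proof phi_sq. replace (phi^5) with ((phi^2)^2 * phi) by ring. rewrite H.
  pose proof phi_bounds. assert (A : (phi+1)^2 >= 6.85) by nra.
  assert (B : (phi+1)^2 * phi >= 6.85 * 1.618).
  { apply Rmult_ge_compat; lra. }
  lra. Qed.
Lemma phi6 : 17.9 <= phi ^ 6.
Proof. pose proof phi5. pose proof phi_bounds. replace (phi^6) with (phi^5*phi) by ring. nra. Qed.
Lemma phi7 : 28 <= phi ^ 7.
Proof. pose proof phi6. pose proof phi_bounds. replace (phi^7) with (phi^6*phi) by ring. nra. Qed.

Lemma r1_pow k : r1 ^ k = / phi ^ k.
Proof. unfold r1. rewrite pow_inv. reflexivity. Qed.
Lemma r2_pow k : r2 ^ k = / phi ^ (2 * k).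
Proof. unfold r2. rewrite pow_inv, pow_mult. reflexivity. Qed.

Definition isalpha (a : R) := (a = r1 /\ 1 - a = r2) \/ (a = r2 /\ 1 - a = r1).

Lemma isalpha_compl a : isalpha a -> isalpha (1 - a).
Proof. intros [[H1 H2]|[H1 H2]]; [right|left]; split; lra. Qed.

Lemma isalpha_bounds a : isalpha a -> r2 <= a <= r1 /\ r2 <= 1 - a <= r1.
Proof. pose proof r1_val; pose proof r2_val. intros [[H1 H2]|[H1 H2]]; lra. Qed.

Lemma ineqA a : isalpha a -> a / 2 >= (1 - a) / phi ^ 6.
Proof.
  intros H. apply isalpha_bounds in H. pose proof r1_val; pose proof r2_val. pose proof phi6.
  assert ((1 - a) / phi ^ 6 <= 1 / 17).
  { unfold Rdiv. apply (Rmult_le_reg_r (phi^6)); [lra|]. rewrite Rmult_assoc, Rinv_l by lra. nra. }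
  lra.
Qed.

Lemma inv_phi6_small : / phi ^ 6 <= 1/17.
Proof. pose proof phi6. apply (Rmult_le_reg_r (phi^6)); [lra|]. rewrite Rinv_l by lra. nra. Qed.

Lemma ineq1 a k N (Qc Qp : R) : isalpha a -> (1 <= k)%nat -> (k + 2 <= N)%nat -> 1 <= Qc -> 0 <= Qp ->
  a ^ k * (INR k * Qc + Qp) >= a ^ (N - 1) * (INR N * Qc + Qp) / phi ^ 6.
Proof.
  intros Ha Hk HNk HQc HQp. apply isalpha_bounds in Ha as [[Ha1 Ha2] _]. pose proof phi_bounds.
  pose proof r1_val; pose proof r2_val.
  set (d := (N - 1 - k)%nat).
  assert (E : (N - 1)%nat = (k + d)%nat) by (unfold d; lia).
  rewrite E, pow_add.
  assert (Hd : a ^ d <= / phi ^ d).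
  { rewrite <- r1_pow. apply pow_incr. lra. }
  assert (Hak : 0 < a ^ k) by (apply pow_lt; lra).
  assert (HN : INR N = INR k + INR d + 1).
  { rewrite <- plus_INR, <- S_INR. f_equal. unfold d. lia. }
  assert (Hd1 : 1 <= INR d) by (apply (le_INR 1); unfold d; lia).
  assert (Hk1 : 1 <= INR k) by (apply (le_INR 1); lia).
  pose proof (phi_pow_lin d). pose proof phi6. pose proof (phi_pow_pos d).
  assert (HP : phi ^ 6 * phi ^ d >= 17 * (1 + INR d / 2)) by nra.
  apply Rle_ge.
  apply (Rmult_le_reg_r (phi ^ 6 * phi ^ d)); [nra|].
  replace (a ^ k * a ^ d * (INR N * Qc + Qp) / phi ^ 6 * (phi ^ 6 * phi ^ d))
    with (a ^ k * (a ^ d * phi ^ d) * (INR N * Qc + Qp)) by (field; lra).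
  assert (a ^ d * phi ^ d <= 1).
  { apply (Rmult_le_compat_r (phi ^ d)) in Hd; [|lra]. rewrite Rinv_l in Hd by lra. exact Hd. }
  assert (0 <= a ^ d) by (apply pow_le; lra).
  assert (INR N * Qc + Qp <= (INR k * Qc + Qp) * (phi ^ 6 * phi ^ d)).
  { rewrite HN. set (PP := phi ^ 6 * phi ^ d) in *.
    assert (PP >= 1) by nra.
    assert (INR k * PP >= INR k + INR d + 1) by nra.
    assert (Qc * (INR k * PP) >= Qc * (INR k + INR d + 1)) by (apply Rmult_ge_compat_l; lra).
    assert (Qp * PP >= Qp) by nra.
    nra. }
  assert (0 <= INR N * Qc + Qp) by (rewrite HN; nra).
  set (X := INR N * Qc + Qp) in *.
  assert (T0 : 0 <= a ^ k * X) by nra.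
  assert (T1 : a ^ k * (a ^ d * phi ^ d) * X <= a ^ k * X) by nra.
  assert (T2 : a ^ k * X <= a ^ k * ((INR k * Qc + Qp) * (phi ^ 6 * phi ^ d))) by (apply Rmult_le_compat_l; lra).
  rewrite <- Rmult_assoc in T2. lra.
Qed.

Lemma ineqG2b a j N : isalpha a -> (1 <= j)%nat -> (j <= N)%nat ->
  (a ^ N + (1 - a) ^ j) * INR j / 2 >= a ^ (N - 1) * (1 - a) * (INR N + 1) / phi ^ 6.
Proof.
  intros Ha Hj HjN.
  pose proof r1_val; pose proof r2_val. pose proof phi_bounds.
  assert (Hj1 : 1 <= INR j) by (apply (le_INR 1); lia).
  assert (HN1 : INR j <= INR N) by (apply le_INR; lia).
  destruct Ha as [[Ha1 Ha2]|[Ha1 Ha2]]; rewrite Ha2, Ha1.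
  -
    assert (ER : r1 ^ (N - 1) * r2 = / phi ^ (N + 1)).
    { rewrite r1_pow. unfold r2. rewrite <- Rinv_mult. f_equal. rewrite <- pow_add. f_equal. lia. }
    rewrite ER.
    destruct (le_lt_dec (N+1) (2*j)) as [C|C].
    + assert (HC : INR N + 1 <= 2 * INR j).
      { rewrite <- S_INR. replace 2 with (INR 2) by (simpl; ring). rewrite <- mult_INR. apply le_INR. lia. }
      assert (0 <= r2 ^ j) by (apply pow_le; lra).
      rewrite r1_pow.
      assert (E7 : phi ^ (N + 1) * phi ^ 6 = phi ^ N * phi ^ 7).
      { rewrite <- !pow_add. f_equal. lia. }
      pose proof phi7. pose proof (phi_pow_pos N). pose proof (phi_pow_pos (N+1)).
      assert (/ phi ^ N * INR j / 2 >= / phi ^ (N + 1) * (INR N + 1) / phi ^ 6).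
      { apply Rle_ge. unfold Rdiv.
        apply (Rmult_le_reg_r (phi ^ N * phi ^ 7)); [nra|].
        replace (/ phi ^ N * INR j * / 2 * (phi ^ N * phi ^ 7)) with (INR j * phi ^ 7 / 2) by (field; lra).
        rewrite <- E7.
        replace (/ phi ^ (N + 1) * (INR N + 1) * / phi ^ 6 * (phi ^ (N + 1) * phi ^ 6)) with (INR N + 1) by (field; lra).
        nra. }
      nra.
    + set (d := (N - 2 * j)%nat).
      assert (EN : N = (2 * j + d)%nat) by (unfold d; lia).
      assert (0 <= r1 ^ N) by (apply pow_le; lra).
      rewrite r2_pow.
      assert (E7 : phi ^ (N + 1) * phi ^ 6 = phi ^ (2 * j) * phi ^ (d + 7)).
      { rewrite <- !pow_add. f_equal. lia. }
      pose proof (phi_pow_lin d). pose proof phi7.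
      assert (HP : phi ^ (d + 7) >= 28 * (1 + INR d / 2)).
      { rewrite pow_add. pose proof (phi_pow_pos d). nra. }
      assert (HNd : INR N = 2 * INR j + INR d).
      { rewrite EN, plus_INR, mult_INR. simpl. ring. }
      pose proof (phi_pow_pos (2*j)). pose proof (phi_pow_pos (N+1)). pose proof (phi_pow_pos (d+7)).
      assert (0 <= INR d) by apply pos_INR.
      assert (/ phi ^ (2 * j) * INR j / 2 >= / phi ^ (N + 1) * (INR N + 1) / phi ^ 6).
      { apply Rle_ge. unfold Rdiv.
        apply (Rmult_le_reg_r (phi ^ (2 * j) * phi ^ (d + 7))); [nra|].
        replace (/ phi ^ (2 * j) * INR j * / 2 * (phi ^ (2 * j) * phi ^ (d + 7))) with (INR j * phi ^ (d+7) / 2) by (field; lra).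
        rewrite <- E7.
        replace (/ phi ^ (N + 1) * (INR N + 1) * / phi ^ 6 * (phi ^ (N + 1) * phi ^ 6)) with (INR N + 1) by (field; lra).
        nra. }
      nra.
  -
    assert (ER : r2 ^ (N - 1) * r1 = / phi ^ (2 * N - 1)).
    { rewrite r2_pow. unfold r1. rewrite <- Rinv_mult. f_equal.
      replace (2 * N - 1)%nat with (S (2 * (N - 1))) by lia. simpl. ring. }
    rewrite ER.
    assert (0 <= r2 ^ N) by (apply pow_le; lra).
    assert (Hr1 : r1 ^ N <= r1 ^ j).
    { replace N with (j + (N - j))%nat by lia. rewrite pow_add.
      assert (0 < r1 ^ j) by (apply pow_lt; lra).
      assert (r1 ^ (N - j) <= 1) by (rewrite <- (pow1 (N - j)); apply pow_incr; lra). nra. }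
    rewrite r1_pow in Hr1.
    assert (E5 : phi ^ (2 * N - 1) * phi ^ 6 = phi ^ N * phi ^ (N + 5)).
    { rewrite <- !pow_add. f_equal. lia. }
    assert (HP : phi ^ (N + 5) >= 11 * (1 + INR N / 2)).
    { rewrite pow_add. pose proof (phi_pow_lin N). pose proof phi5. pose proof (phi_pow_pos N). nra. }
    pose proof (phi_pow_pos N). pose proof (phi_pow_pos (2*N-1)). pose proof (phi_pow_pos (N+5)).
    assert (0 <= INR N) by apply pos_INR.
    assert (/ phi ^ N * INR j / 2 >= / phi ^ (2 * N - 1) * (INR N + 1) / phi ^ 6).
    { apply Rle_ge. unfold Rdiv.
      apply (Rmult_le_reg_r (phi ^ N * phi ^ (N+5))); [nra|].
      replace (/ phi ^ N * INR j * / 2 * (phi ^ N * phi ^ (N+5))) with (INR j * phi ^ (N+5) / 2) by (field; lra).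
      rewrite <- E5.
      replace (/ phi ^ (2 * N - 1) * (INR N + 1) * / phi ^ 6 * (phi ^ (2 * N - 1) * phi ^ 6)) with (INR N + 1) by (field; lra).
      nra. }
    rewrite r1_pow. rewrite r1_pow in Hr1.
    assert (/ phi ^ N * INR j <= / phi ^ j * INR j) by (apply Rmult_le_compat_r; lra).
    assert (0 <= r2 ^ N * INR j) by nra. lra.
Qed.

End P5.
Import P5.

Module P4.

Lemma quot_bound gx gy x y Ms Ln e : (e = 1 \/ e = -1) -> 0 <= Ms -> Ms <= e * (gy - gx) ->
  0 < e * (y - x) -> e * (y - x) <= Ln -> (gy - gx) / (y - x) >= Ms / Ln.
Proof.
  intros He H1 H2 H3 H4.
  assert (E : (gy - gx) / (y - x) = (e * (gy - gx)) / (e * (y - x))).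
  { field. destruct He; subst; lra. }
  rewrite E. apply Rle_ge. unfold Rdiv.
  apply Rle_trans with (Ms * / (e * (y - x))).
  - apply Rmult_le_compat_l; auto. apply Rinv_le_contravar; lra.
  - apply Rmult_le_compat_r; [|lra]. left. apply Rinv_0_lt_compat. lra.
Qed.

Lemma quot_two gx gy gE x y E A B a b e : (e = 1 \/ e = -1) ->
  0 <= A -> A <= e * (gx - gE) -> 0 <= B -> B <= e * (gE - gy) ->
  0 < e * (x - E) -> e * (x - E) <= a -> 0 < e * (E - y) -> e * (E - y) <= b ->
  (gy - gx) / (y - x) >= (A + B) / (a + b).
Proof.
  intros He HA HA' HB HB' Hs Hs' Ht Ht'.
  apply (quot_bound gx gy x y (A+B) (a+b) (-e)).
  - destruct He; [right|left]; lra.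
  - lra.
  - lra.
  - lra.
  - lra.
Qed.

Lemma floor_nat z : 1 <= z -> exists k : nat, (1 <= k)%nat /\ INR k <= z < INR k + 1.
Proof.
  intros Hz. pose proof (base_Int_part z) as [B1 B2].
  assert (H0 : (0 <= Int_part z)%Z) by (apply le_IZR; simpl; lra).
  exists (Z.to_nat (Int_part z)).
  assert (E : INR (Z.to_nat (Int_part z)) = IZR (Int_part z)) by (rewrite INR_IZR_INZ, Z2Nat.id; auto).
  rewrite E. split; [|lra].
  apply INR_le. rewrite E. simpl.
  assert (IZR (Int_part z) > 0) by lra.
  apply lt_IZR in H. apply IZR_le. lia.
Qed.

Section Core.
Variable lam : R.
Variable g : R -> R.
Hypothesis Hlam : 0 < lam < 1.
Hypothesis Hla : isalpha lam.
Hypothesis Hg0 : g 0 = 0.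
Hypothesis Hg1 : g 1 = 1.
Hypothesis Hrec : forall p q r s : nat, (0 < q)%nat -> (0 < s)%nat -> (r <= s)%nat ->
     (r * q = p * s + 1)%nat ->
     g (INR (p + r) / INR (q + s)) =
       (1 - lam) * g (INR p / INR q) + lam * g (INR r / INR s).
Hypothesis Hcont : forall y, 0 <= y <= 1 -> forall eps, 0 < eps -> exists d, 0 < d /\
     forall z, 0 <= z <= 1 -> Rabs (z - y) < d -> Rabs (g z - g y) < eps.
Variable x : R.
Hypothesis Hx : 0 < x < 1.
Hypothesis Hirr : irrational x.

Definition gM := M g x.
Definition gsig := P3.sigma g x.
Definition al := alpha lam.

Lemma W_chain_i n k : (1 <= k)%nat -> g (h x n (/ INR k)) - g (h x n 0) = gsig n * al n ^ (k - 1).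
Proof. intros. unfold gsig, al. apply chain_i; auto. Qed.

Lemma W_M_S n : gM (S n) = gM n * al n ^ (dg x n - 1) * (1 - al n).
Proof. unfold gM, al. apply M_S; auto. Qed.

Lemma W_chain_ii m pv qv : (1 <= m)%nat -> (pv + pm x m = pn x m)%nat -> (qv + qm x m = qn x m)%nat ->
  (pv <= qv)%nat -> (1 <= qv)%nat ->
  (forall j, g (h x m (- / INR (S j))) - g (h x m 0) = (g (h x m (-1)) - g (h x m 0)) * (1 - al m) ^ j)
  /\ (g (h x m (-1)) - g (h x m 0)) * (1 - al m) = - gsig m.
Proof. intros. unfold gsig, al. apply (chain_ii lam g Hlam Hrec x Hx Hirr m pv qv); auto. Qed.

Lemma W_hk_fr n k : (1 <= k)%nat -> h x n (/ INR k) = fr (k * pn x n + pm x n) (k * qn x n + qm x n).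
Proof. intros. eapply hk_fr; eauto. Qed.

Lemma W_h0_fr n : h x n 0 = fr (pn x n) (qn x n).
Proof. apply h0_fr; auto. Qed.
Definition T t := gM t * Q x t * Qm x t / phi ^ 6.

Lemma gmono z1 z2 : 0 <= z1 -> z1 <= z2 -> z2 <= 1 -> g z1 <= g z2.
Proof. apply (g_mono lam g Hlam Hg0 Hg1 Hrec Hcont). Qed.

Lemma al_isalpha n : isalpha (al n).
Proof. unfold al, alpha. destruct (Nat.even n); auto. apply isalpha_compl; auto. Qed.

Lemma al_bounds n : 0 < al n < 1.
Proof. pose proof (isalpha_bounds _ (al_isalpha n)). pose proof r1_val. pose proof r2_val. lra. Qed.

Lemma epsn_cases n : epsn n = 1 \/ epsn n = -1.
Proof. unfold epsn. destruct (Nat.even n); auto. Qed.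

Lemma den n w : 0 <= w -> 0 < Q x n + Qm x n * w.
Proof. apply den_pos; auto. Qed.

Lemma h_emono n w1 w2 : 0 < Q x n + Qm x n * w1 -> 0 < Q x n + Qm x n * w2 ->
  epsn n * (h x n w2 - h x n w1) = (w2 - w1) / ((Q x n + Qm x n * w1) * (Q x n + Qm x n * w2)).
Proof.
  intros H1 H2. rewrite h_diff by lra.
  destruct (epsn_cases n) as [E|E]; rewrite E; field; lra.
Qed.

Lemma h_emono_le n w1 w2 : 0 < Q x n + Qm x n * w1 -> 0 < Q x n + Qm x n * w2 -> w1 <= w2 ->
  0 <= epsn n * (h x n w2 - h x n w1).
Proof.
  intros H1 H2 H. rewrite h_emono by auto. apply Rmult_le_pos; [lra|].
  left. apply Rinv_0_lt_compat. nra.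
Qed.

Lemma h_emono_lt n w1 w2 : 0 < Q x n + Qm x n * w1 -> 0 < Q x n + Qm x n * w2 -> w1 < w2 ->
  0 < epsn n * (h x n w2 - h x n w1).
Proof.
  intros H1 H2 H. rewrite h_emono by auto. apply Rmult_lt_0_compat; [lra|].
  apply Rinv_0_lt_compat. nra.
Qed.

Lemma in01_between e a b c : (e = 1 \/ e = -1) -> 0 <= a <= 1 -> 0 <= c <= 1 ->
  0 <= e * (b - a) -> 0 <= e * (c - b) -> 0 <= b <= 1.
Proof. intros [->| ->] ? ? ? ?; lra. Qed.

Lemma g_emono e a b : (e = 1 \/ e = -1) -> 0 <= a <= 1 -> 0 <= b <= 1 -> 0 <= e * (b - a) ->
  0 <= e * (g b - g a).
Proof.
  intros [->| ->] Ha Hb H.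
  - assert (g a <= g b) by (apply gmono; lra). lra.
  - assert (g b <= g a) by (apply gmono; lra). lra.
Qed.

Lemma h01 n : 0 <= h x n 0 <= 1 /\ 0 <= h x n 1 <= 1.
Proof.
  destruct (q_facts x Hx Hirr n) as (Q1&Q2&Q3&Q4&_).
  assert (E0 : h x n 0 = fr (pn x n) (qn x n)) by (apply W_h0_fr).
  assert (E1 : h x n 1 = fr (pn x n + pm x n) (qn x n + qm x n)).
  { replace 1 with (/ INR 1) by (simpl; field). rewrite W_hk_fr by lia. f_equal; lia. }
  rewrite E0, E1. unfold fr.
  assert (0 < INR (qn x n)) by (apply lt_0_INR; lia).
  assert (0 < INR (qn x n + qm x n)) by (apply lt_0_INR; lia).
  assert (INR (pn x n) <= INR (qn x n)) by (apply le_INR; lia).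
  assert (INR (pn x n + pm x n) <= INR (qn x n + qm x n)) by (apply le_INR; lia).
  assert (0 <= INR (pn x n)) by apply pos_INR.
  assert (0 <= INR (pn x n + pm x n)) by apply pos_INR.
  split; split.
  - apply Rmult_le_pos; auto. left; apply Rinv_0_lt_compat; auto.
  - apply (Rmult_le_reg_r (INR (qn x n))); auto. unfold Rdiv. rewrite Rmult_assoc, Rinv_l; lra.
  - apply Rmult_le_pos; auto. left; apply Rinv_0_lt_compat; auto.
  - apply (Rmult_le_reg_r (INR (qn x n + qm x n))); auto. unfold Rdiv. rewrite Rmult_assoc, Rinv_l; lra.
Qed.

Lemma eps_sigma n : epsn n * gsig n = gM n.
Proof.
  unfold gM, gsig, M.
  assert (H : 0 <= epsn n * P3.sigma g x n).
  { unfold P3.sigma. destruct (h01 n) as [A B].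
    apply g_emono; auto. apply epsn_cases. apply h_emono_le; try apply den; lra. }
  destruct (epsn_cases n) as [E|E]; rewrite E in *.
  - rewrite Rabs_pos_eq; lra.
  - rewrite Rabs_left1; lra.
Qed.

Lemma gM_nonneg n : 0 <= gM n.
Proof. unfold gM, M. apply Rabs_pos. Qed.


Lemma Q_S n : Q x (S n) = INR (dg x n) * Q x n + Qm x n /\ Qm x (S n) = Q x n.
Proof. unfold Q, Qm. rewrite qn_S, qm_S, plus_INR, mult_INR. auto. Qed.

Lemma Q_ge1 n : 1 <= Q x n.
Proof. unfold Q. destruct (q_facts x Hx Hirr n) as (Q1&_). apply (le_INR 1); lia. Qed.
Lemma Qm_nonneg n : 0 <= Qm x n.
Proof. unfold Qm. apply pos_INR. Qed.
Lemma Qm_le n : Qm x n <= Q x n.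
Proof. unfold Q, Qm. destruct (q_facts x Hx Hirr n) as (_&Q2&_). apply le_INR; lia. Qed.

Lemma u_facts n : 0 < u x n /\ INR (dg x n) < / u x n < INR (dg x n) + 1 /\ (1 <= dg x n)%nat
  /\ x = h x n (u x n).
Proof.
  pose proof (u_pos x Hx Hirr n). destruct (dg_bounds x Hx Hirr n) as [A B].
  repeat split; try lra; auto. apply x_h; auto.
Qed.

Lemma dist0 n w : 0 < w -> epsn n * (h x n w - h x n 0) = 1 / (Q x n * (Q x n / w + Qm x n)).
Proof.
  intros Hw. pose proof (Q_ge1 n). pose proof (Qm_nonneg n).
  rewrite h_emono; try apply den; try lra. field. split; [lra|split; [nra|lra]].
Qed.

Lemma case1 n k v y : (1 <= k)%nat -> (k + 2 <= dg x n)%nat -> / (INR k + 1) < v -> v <= / INR k ->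
  y = h x n v -> 0 <= y <= 1 -> (g y - g x) / (y - x) >= T (S n).
Proof.
  intros Hk HkN Hv1 Hv2 Hy Hy01.
  destruct (u_facts n) as (Hu0 & [Hu1 Hu2] & HN1 & Hxh).
  set (N := dg x n) in *. set (uu := u x n) in *. set (e := epsn n).
  assert (He : e = 1 \/ e = -1) by apply epsn_cases.
  assert (Hk1 : 1 <= INR k) by (apply (le_INR 1); lia).
  assert (HNk : INR k + 2 <= INR N).
  { assert (INR (k + 2) <= INR N) by (apply le_INR; lia). rewrite plus_INR in H. simpl in H. lra. }
  set (w1 := / INR (k + 2)). set (w2 := / INR (k + 1)).
  assert (Ew1 : w1 = / (INR k + 2)) by (unfold w1; rewrite plus_INR; simpl; f_equal; ring).
  assert (Ew2 : w2 = / (INR k + 1)) by (unfold w2; rewrite plus_INR; simpl; f_equal; ring).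
  assert (Huw1 : uu < w1).
  { rewrite Ew1. apply (Rmult_lt_reg_l (/uu)). apply Rinv_0_lt_compat; auto.
    rewrite Rinv_l by lra. apply (Rmult_lt_reg_l (INR k + 2)); [lra|].
    field_simplify; try lra. }
  assert (Hw12 : w1 < w2) by (rewrite Ew1, Ew2; apply Rinv_lt_contravar; nra).
  assert (Hw2v : w2 < v) by (rewrite Ew2; auto).
  assert (Hw1p : 0 < w1) by lra.
  assert (Hvk : 0 < / INR k) by (apply Rinv_0_lt_compat; lra).
  pose proof (fun w (H : 0 <= w) => den n w H) as D.
  assert (Hx01 : 0 <= x <= 1) by lra.
  assert (Ex : 0 <= e * (h x n w1 - h x n uu)) by (apply h_emono_le; try apply D; lra).
  assert (E12 : 0 <= e * (h x n w2 - h x n w1)) by (apply h_emono_le; try apply D; lra).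
  assert (E2v : 0 <= e * (h x n v - h x n w2)) by (apply h_emono_le; try apply D; lra).
  rewrite <- Hxh in Ex. rewrite <- Hy in E2v.
  assert (Hw2in : 0 <= h x n w2 <= 1).
  { apply (in01_between e x (h x n w2) y He); auto. lra. }
  assert (Hw1in : 0 <= h x n w1 <= 1).
  { apply (in01_between e x (h x n w1) (h x n w2) He); auto. }
  assert (Cm1 : g (h x n w1) - g (h x n 0) = gsig n * al n ^ (k + 1)).
  { unfold w1. rewrite W_chain_i by lia. f_equal. f_equal. lia. }
  assert (Cm2 : g (h x n w2) - g (h x n 0) = gsig n * al n ^ k).
  { unfold w2. rewrite W_chain_i by lia. f_equal. f_equal. lia. }
  assert (Mass : e * (g (h x n w2) - g (h x n w1)) = gM n * al n ^ k * (1 - al n)).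
  { replace (g (h x n w2) - g (h x n w1)) with ((g (h x n w2) - g (h x n 0)) - (g (h x n w1) - g (h x n 0))) by ring.
    rewrite Cm1, Cm2. rewrite <- (eps_sigma n). fold e. rewrite pow_add, pow_1. ring. }
  assert (G1 : 0 <= e * (g (h x n w1) - g x)) by (apply g_emono; auto; lra).
  assert (G2 : 0 <= e * (g y - g (h x n w2))) by (apply g_emono; auto; lra).
  assert (Lyx : 0 < e * (y - x)).
  { assert (Eyx : y - x = h x n v - h x n uu) by (rewrite <- Hxh, Hy; reflexivity).
    rewrite Eyx. apply h_emono_lt; try apply D; lra. }
  assert (Lk : e * (y - x) <= 1 / (Q x n * (Q x n * INR k + Qm x n))).
  { assert (A1 : 0 <= e * (h x n uu - h x n 0)) by (apply h_emono_le; try apply D; lra).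
    assert (A2 : 0 <= e * (h x n (/ INR k) - h x n v)) by (apply h_emono_le; try apply D; lra).
    pose proof (dist0 n (/ INR k) Hvk) as Dk. unfold Rdiv in Dk. rewrite Rinv_inv in Dk. unfold Rdiv.
    rewrite <- Hxh in A1. rewrite <- Hy in A2. fold e in Dk. lra. }
  assert (Hal := al_bounds n).
  assert (Hpow : 0 <= al n ^ k) by (apply pow_le; lra).
  assert (HM := gM_nonneg n).
  pose proof (Q_ge1 n). pose proof (Qm_nonneg n).
  assert (Q1 := quot_bound (g x) (g y) x y (gM n * al n ^ k * (1 - al n)) (1 / (Q x n * (Q x n * INR k + Qm x n))) e He
    ltac:(apply Rmult_le_pos; [apply Rmult_le_pos|]; lra) ltac:(lra) Lyx Lk).
  eapply Rge_trans; [exact Q1|].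
  unfold T. rewrite W_M_S. destruct (Q_S n) as [QS1 QS2]. rewrite QS1, QS2. fold N.
  pose proof (ineq1 (al n) k N (Q x n) (Qm x n) (al_isalpha n) Hk HkN (Q_ge1 n) (Qm_nonneg n)) as I1.
  replace (gM n * al n ^ k * (1 - al n) / (1 / (Q x n * (Q x n * INR k + Qm x n)))) with
    (gM n * (1 - al n) * Q x n * (al n ^ k * (INR k * Q x n + Qm x n))) by (field; nra).
  replace (gM n * al n ^ (N - 1) * (1 - al n) * (INR N * Q x n + Qm x n) * Q x n / phi ^ 6) with
    (gM n * (1 - al n) * Q x n * (al n ^ (N - 1) * (INR N * Q x n + Qm x n) / phi ^ 6)) by (field; pose proof phi_bounds; lra).
  apply Rle_ge. apply Rmult_le_compat_l; [apply Rmult_le_pos; [apply Rmult_le_pos|]; lra|]. lra.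
Qed.

Lemma W_h_S n z : 0 <= z -> h x (S n) z = h x n (/ (INR (dg x n) + z)).
Proof. intros. apply h_S; auto. Qed.

Lemma case3 n v y : 0 <= v -> v < / (INR (dg x n) + 1) -> (2 <= dg x (S n))%nat ->
  y = h x n v -> 0 <= y <= 1 -> (g y - g x) / (y - x) >= T (S n).
Proof.
  intros Hv0 Hv1 Ha2 Hy Hy01.
  destruct (u_facts n) as (Hu0 & [Hu1 Hu2] & HN1 & Hxh).
  destruct (u_facts (S n)) as (Hu0' & [Hu1' Hu2'] & _ & _).
  destruct (dg_real x Hx Hirr n) as [_ Eu].
  set (N := dg x n) in *. set (uu := u x n) in *. set (u' := u x (S n)) in *. set (e := epsn n).
  assert (He : e = 1 \/ e = -1) by apply epsn_cases.
  assert (HN1' : 1 <= INR N) by (apply (le_INR 1); lia).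
  assert (Ha2' : 2 <= INR (dg x (S n))) by (apply (le_INR 2); lia).
  assert (Hu'2 : u' < / 2).
  { apply (Rmult_lt_reg_l (/ u')). apply Rinv_0_lt_compat; lra. rewrite Rinv_l by lra.
    apply (Rmult_lt_reg_l 2); [lra|]. field_simplify; lra. }
  assert (Euu : uu = / (INR N + u')).
  { rewrite Eu. replace (INR N + (/ uu - INR N)) with (/ uu) by ring. rewrite Rinv_inv. reflexivity. }
  set (wa := / (INR N + 1)). set (wb := / (INR N + / 2)).
  assert (Hva : v < wa) by auto.
  assert (Hab : wa < wb) by (apply Rinv_lt_contravar; nra).
  assert (Hbu : wb < uu) by (rewrite Euu; apply Rinv_lt_contravar; nra).
  assert (Hwa0 : 0 < wa) by (apply Rinv_0_lt_compat; lra).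
  pose proof (fun w (H : 0 <= w) => den n w H) as D.
  assert (Hx01 : 0 <= x <= 1) by lra.
  assert (E1 : 0 <= e * (h x n wa - y)) by (rewrite Hy; apply h_emono_le; try apply D; lra).
  assert (E2 : 0 <= e * (h x n wb - h x n wa)) by (apply h_emono_le; try apply D; lra).
  assert (E3 : 0 <= e * (x - h x n wb)).
  { rewrite Hxh at 1. apply h_emono_le; try apply D; lra. }
  assert (Hbin : 0 <= h x n wb <= 1) by (apply (in01_between e y (h x n wb) x He); auto; lra).
  assert (Hain : 0 <= h x n wa <= 1) by (apply (in01_between e y (h x n wa) (h x n wb) He); auto).
  assert (Ea : h x n wa = h x (S n) (/ INR 1)).
  { rewrite W_h_S by (simpl; lra). unfold wa. replace (/ INR 1) with 1 by (simpl; field). reflexivity. }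
  assert (Eb : h x n wb = h x (S n) (/ INR 2)).
  { rewrite W_h_S by (simpl; lra). unfold wb. replace (INR 2) with 2 by (simpl; ring). reflexivity. }
  assert (Ca := W_chain_i (S n) 1 ltac:(lia)). assert (Cb := W_chain_i (S n) 2 ltac:(lia)).
  rewrite <- Ea in Ca. rewrite <- Eb in Cb. simpl in Ca, Cb.
  assert (Gab : 0 <= e * (g (h x n wb) - g (h x n wa))) by (apply g_emono; auto).
  assert (Mass : e * (g (h x n wb) - g (h x n wa)) = gM (S n) * (1 - al (S n))).
  { assert (Ab : Rabs (g (h x n wb) - g (h x n wa)) = gM (S n) * (1 - al (S n))).
    { replace (g (h x n wb) - g (h x n wa)) with (gsig (S n) * (al (S n) - 1)) by lra.
      pose proof (al_bounds (S n)).
      rewrite Rabs_mult, (Rabs_left1 (al (S n) - 1)) by lra. unfold gM, gsig, M. ring. }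
    rewrite <- Ab. destruct He as [-> | ->].
    - rewrite Rabs_pos_eq; lra.
    - rewrite Rabs_left1; lra. }
  assert (G1 : 0 <= e * (g (h x n wa) - g y)) by (apply g_emono; auto).
  assert (G2 : 0 <= e * (g x - g (h x n wb))) by (apply g_emono; auto).
  assert (Lxy : 0 < e * (x - y)).
  { assert (Exy : x - y = h x n uu - h x n v) by (rewrite <- Hxh, Hy; reflexivity).
    rewrite Exy. apply h_emono_lt; try apply D; lra. }
  assert (HuN : uu < / INR N).
  { apply (Rmult_lt_reg_l (/uu)). apply Rinv_0_lt_compat; auto. rewrite Rinv_l by lra.
    apply (Rmult_lt_reg_l (INR N)); [lra|]. field_simplify; try lra. }
  assert (HvN : 0 < / INR N) by (apply Rinv_0_lt_compat; lra).
  assert (LN : e * (x - y) <= 1 * / (Q x n * (Q x n * INR N + Qm x n))).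
  { assert (A1 : 0 <= e * (h x n v - h x n 0)) by (apply h_emono_le; try apply D; lra).
    assert (A2 : 0 <= e * (h x n (/ INR N) - h x n uu)) by (apply h_emono_le; try apply D; lra).
    pose proof (dist0 n (/ INR N) HvN) as Dk.
    unfold Rdiv in Dk. rewrite Rinv_inv in Dk. fold e in Dk.
    rewrite <- Hxh in A2. rewrite <- Hy in A1. lra. }
  assert (Hal := al_bounds (S n)).
  assert (HM := gM_nonneg (S n)).
  pose proof (Q_ge1 n). pose proof (Qm_nonneg n).
  assert (Q1 := quot_bound (g x) (g y) x y (gM (S n) * (1 - al (S n))) (1 * / (Q x n * (Q x n * INR N + Qm x n))) (-e)
    ltac:(destruct He; [right|left]; lra) ltac:(apply Rmult_le_pos; lra) ltac:(lra) ltac:(lra) ltac:(lra)).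
  eapply Rge_trans; [exact Q1|].
  unfold T. destruct (Q_S n) as [QS1 QS2]. rewrite QS1, QS2. fold N.
  pose proof (isalpha_bounds _ (al_isalpha (S n))) as [_ [Hb1 Hb2]].
  pose proof r2_val. pose proof inv_phi6_small. pose proof phi_bounds. pose proof (phi_pow_pos 6).
  replace (gM (S n) * (1 - al (S n)) / (1 * / (Q x n * (Q x n * INR N + Qm x n)))) with
    (gM (S n) * (INR N * Q x n + Qm x n) * Q x n * (1 - al (S n))) by (field; nra).
  unfold Rdiv. apply Rle_ge. apply Rmult_le_compat_l.
  - apply Rmult_le_pos; [apply Rmult_le_pos|]; try lra. nra.
  - lra.
Qed.

Lemma frac_two A B a b : 0 <= A -> 0 <= B -> 0 < a -> 0 < b ->
  (a <= b -> (A + B) / (a + b) >= B / (2 * b)) /\ (b <= a -> (A + B) / (a + b) >= A / (2 * a)).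
Proof.
  intros HA HB Ha Hb. split; intro H; apply Rle_ge; unfold Rdiv.
  - apply Rle_trans with (B * / (a + b)).
    + apply Rmult_le_compat_l; auto. apply Rinv_le_contravar; lra.
    + apply Rmult_le_compat_r; [left; apply Rinv_0_lt_compat; lra|lra].
  - apply Rle_trans with (A * / (a + b)).
    + apply Rmult_le_compat_l; auto. apply Rinv_le_contravar; lra.
    + apply Rmult_le_compat_r; [left; apply Rinv_0_lt_compat; lra|lra].
Qed.

Lemma frac_two' A B a b : 0 <= A -> 0 <= B -> 0 < a -> 0 < b ->
  a <= b -> (A + B) / (a + b) >= (A + B) / (2 * b).
Proof.
  intros HA HB Ha Hb H. apply Rle_ge; unfold Rdiv.
  apply Rmult_le_compat_l; [lra|]. apply Rinv_le_contravar; lra.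
Qed.

Section Gen.
Variables (m pv qv : nat).
Hypothesis Hm : (1 <= m)%nat.
Hypothesis Hpv : (pv + pm x m = pn x m)%nat.
Hypothesis Hqv : (qv + qm x m = qn x m)%nat.
Hypothesis Hpq : (pv <= qv)%nat.
Hypothesis Hqv1 : (1 <= qv)%nat.

Lemma Qv_eq : INR qv = Q x m - Qm x m.
Proof. unfold Q, Qm. rewrite <- Hqv, plus_INR. ring. Qed.

Lemma den_gen w : -1 <= w -> 0 < Q x m + Qm x m * w.
Proof.
  intros Hw. pose proof Qv_eq. assert (1 <= INR qv) by (apply (le_INR 1); lia).
  pose proof (Qm_nonneg m). nra.
Qed.

Lemma gen_xside : let e := epsn m in let N := dg x m in
  0 <= gM m * al m ^ N <= e * (g x - g (h x m 0)) /\
  0 < e * (x - h x m 0) <= 1 / (Q x m * (Q x m * INR N + Qm x m)) /\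
  0 <= h x m 0 <= 1.
Proof.
  intros e N.
  destruct (u_facts m) as (Hu0 & [Hu1 Hu2] & HN1 & Hxh).
  set (uu := u x m) in *. fold N in Hu1, Hu2, HN1.
  assert (He : e = 1 \/ e = -1) by apply epsn_cases.
  assert (HN1' : 1 <= INR N) by (apply (le_INR 1); lia).
  pose proof (fun w (H : 0 <= w) => den m w H) as D.
  set (wx := / INR (N + 1)).
  assert (Ewx : wx = / (INR N + 1)) by (unfold wx; rewrite plus_INR; simpl; f_equal).
  assert (Hwx : 0 < wx) by (rewrite Ewx; apply Rinv_0_lt_compat; lra).
  assert (Hwu : wx < uu).
  { rewrite Ewx. apply (Rmult_lt_reg_l (/uu)). apply Rinv_0_lt_compat; auto. rewrite Rinv_l by lra.
    apply (Rmult_lt_reg_l (INR N + 1)); [lra|]. field_simplify; try lra. }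
  assert (HuN : uu < / INR N).
  { apply (Rmult_lt_reg_l (/uu)). apply Rinv_0_lt_compat; auto. rewrite Rinv_l by lra.
    apply (Rmult_lt_reg_l (INR N)); [lra|]. field_simplify; try lra. }
  assert (HvN : 0 < / INR N) by (apply Rinv_0_lt_compat; lra).
  destruct (h01 m) as [H0in _].
  assert (Hx01 : 0 <= x <= 1) by lra.
  assert (E1 : 0 <= e * (h x m wx - h x m 0)) by (apply h_emono_le; try apply D; lra).
  assert (E2 : 0 <= e * (x - h x m wx)) by (rewrite Hxh at 1; apply h_emono_le; try apply D; lra).
  assert (Hwin : 0 <= h x m wx <= 1) by (apply (in01_between e (h x m 0) (h x m wx) x He); auto).
  assert (C := W_chain_i m (N + 1) ltac:(lia)). fold wx in C.
  replace (N + 1 - 1)%nat with N in C by lia.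
  assert (G1 : 0 <= e * (g x - g (h x m wx))) by (apply g_emono; auto).
  assert (Mass : e * (g (h x m wx) - g (h x m 0)) = gM m * al m ^ N).
  { rewrite C. rewrite <- (eps_sigma m). fold e. ring. }
  assert (HM := gM_nonneg m). pose proof (al_bounds m).
  assert (0 <= al m ^ N) by (apply pow_le; lra).
  split; [split; [apply Rmult_le_pos; auto|lra]|].
  split; [|auto]. split.
  - assert (Exy : x - h x m 0 = h x m uu - h x m 0) by (rewrite <- Hxh; reflexivity).
    rewrite Exy. apply h_emono_lt; try apply D; lra.
  - assert (A2 : 0 <= e * (h x m (/ INR N) - h x m uu)) by (apply h_emono_le; try apply D; lra).
    pose proof (dist0 m (/ INR N) HvN) as Dk.
    unfold Rdiv in Dk. rewrite Rinv_inv in Dk. fold e in Dk.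
    rewrite <- Hxh in A2. unfold Rdiv. lra.
Qed.

Lemma gen_yside J v y : (1 <= J)%nat -> - / INR J <= v -> v <= - / INR (S J) -> y = h x m v -> 0 <= y <= 1 ->
  let e := epsn m in
  0 <= gM m * (1 - al m) ^ (J - 1) <= e * (g (h x m 0) - g y) /\
  0 < e * (h x m 0 - y) <= 1 / (Q x m * (Q x m * INR J - Qm x m)).
Proof.
  intros HJ Hv1 Hv2 Hy Hy01 e.
  assert (He : e = 1 \/ e = -1) by apply epsn_cases.
  assert (HJ1 : 1 <= INR J) by (apply (le_INR 1); lia).
  assert (HJ0 : 0 < / INR J) by (apply Rinv_0_lt_compat; lra).
  assert (HJ1' : / INR J <= 1) by (rewrite <- Rinv_1; apply Rinv_le_contravar; lra).
  assert (HSJ : 0 < / INR (S J)) by (apply Rinv_0_lt_compat; rewrite S_INR; lra).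
  assert (HSJ' : / INR (S J) <= / INR J) by (apply Rinv_le_contravar; [lra|rewrite S_INR; lra]).
  pose proof (fun w (H : -1 <= w) => den_gen w H) as D.
  destruct (h01 m) as [H0in _].
  set (wr := - / INR (S J)).
  assert (E1 : 0 <= e * (h x m 0 - h x m wr)) by (apply h_emono_le; try apply D; unfold wr; lra).
  assert (E2 : 0 <= e * (h x m wr - y)) by (rewrite Hy; apply h_emono_le; try apply D; unfold wr; lra).
  assert (Hwin : 0 <= h x m wr <= 1) by (apply (in01_between e y (h x m wr) (h x m 0) He); auto).
  destruct (W_chain_ii m pv qv Hm Hpv Hqv Hpq Hqv1) as [C1 C2].
  specialize (C1 J). fold wr in C1.
  assert (Mass : e * (g (h x m 0) - g (h x m wr)) = gM m * (1 - al m) ^ (J - 1)).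
  { replace (g (h x m 0) - g (h x m wr)) with (- (g (h x m wr) - g (h x m 0))) by ring.
    rewrite C1. replace J with (S (J - 1)) at 1 by lia. rewrite <- tech_pow_Rmult.
    replace (- ((g (h x m (-1)) - g (h x m 0)) * ((1 - al m) * (1 - al m) ^ (J - 1))))
      with (- ((g (h x m (-1)) - g (h x m 0)) * (1 - al m)) * (1 - al m) ^ (J - 1)) by ring.
    rewrite C2. rewrite <- (eps_sigma m). fold e. ring. }
  assert (G1 : 0 <= e * (g (h x m wr) - g y)) by (apply g_emono; auto).
  assert (HM := gM_nonneg m). pose proof (al_bounds m).
  assert (0 <= (1 - al m) ^ (J - 1)) by (apply pow_le; lra).
  split; [split; [apply Rmult_le_pos; auto|lra]|].
  split.
  - rewrite Hy. apply h_emono_lt; try apply D; lra.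
  - assert (A2 : 0 <= e * (y - h x m (- / INR J))) by (rewrite Hy; apply h_emono_le; try apply D; lra).
    assert (Dk : e * (h x m 0 - h x m (- / INR J)) = 1 / (Q x m * (Q x m * INR J - Qm x m))).
    { unfold e. rewrite h_emono by (apply D; lra). pose proof (Q_ge1 m).
      assert (0 < Q x m + Qm x m * - / INR J) by (apply D; lra).
      field. split; [|split]; try lra.
      intro Hc. assert (Q x m * INR J - Qm x m = INR J * (Q x m + Qm x m * - / INR J)) by (field; lra).
      nra. }
    lra.
Qed.

Lemma gen_special v y : -1 <= v -> v < - / 2 -> y = h x m v -> 0 <= y <= 1 ->
  (g y - g x) / (y - x) >= gM m * Q x m * INR qv / 2.
Proof.
  intros Hv1 Hv2 Hy Hy01.
  destruct gen_xside as ([HA0 HA] & [Ha0 Ha] & HE01).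
  destruct (gen_yside 1 v y ltac:(lia) ltac:(simpl; rewrite Rinv_1; lra) ltac:(simpl; lra) Hy Hy01) as ([HB0 HB] & [Hb0 Hb]).
  set (e := epsn m) in *. set (N := dg x m) in *.
  simpl in HB0, HB. rewrite Rmult_1_r in HB0, HB. simpl in Hb. rewrite Rmult_1_r in Hb.
  assert (He : e = 1 \/ e = -1) by apply epsn_cases.
  pose proof (Q_ge1 m). pose proof (Qm_nonneg m). pose proof Qv_eq.
  assert (Hqv' : 1 <= INR qv) by (apply (le_INR 1); lia).
  destruct (u_facts m) as (_ & _ & HN1 & _). fold N in HN1.
  assert (HN1' : 1 <= INR N) by (apply (le_INR 1); lia).
  set (a := 1 / (Q x m * (Q x m * INR N + Qm x m))) in *.
  set (b := 1 / (Q x m * (Q x m - Qm x m))) in *.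
  assert (Hab : a <= b).
  { unfold a, b. unfold Rdiv. rewrite !Rmult_1_l. apply Rinv_le_contravar; nra. }
  assert (Q2 := quot_two (g x) (g y) (g (h x m 0)) x y (h x m 0) (gM m * al m ^ N) (gM m) a b e He
     HA0 HA HB0 HB Ha0 Ha Hb0 Hb).
  destruct (frac_two (gM m * al m ^ N) (gM m) a b HA0 HB0 ltac:(lra) ltac:(lra)) as [F1 _].
  eapply Rge_trans; [exact Q2|]. eapply Rge_trans; [exact (F1 Hab)|].
  unfold b. rewrite H1. right. field. nra.
Qed.

Lemma gen_main v y : - / 2 <= v -> v < 0 -> y = h x m v -> 0 <= y <= 1 ->
  (g y - g x) / (y - x) >= T (S m).
Proof.
  intros Hv1 Hv2 Hy Hy01.
  assert (Hz : 2 <= / (- v)).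
  { replace 2 with (/ / 2) by (rewrite Rinv_inv; reflexivity). apply Rinv_le_contravar; lra. }
  destruct (floor_nat (/ (- v)) ltac:(lra)) as (J & HJ & HJ1 & HJ2).
  assert (HJ2' : (2 <= J)%nat).
  { destruct (le_lt_dec 2 J); auto. assert (J = 1)%nat by lia. subst. simpl in HJ2. lra. }
  assert (HJr : 2 <= INR J) by (apply (le_INR 2); lia).
  assert (Hva : - / INR J <= v).
  { assert (/ / (- v) <= / INR J) by (apply Rinv_le_contravar; lra). rewrite Rinv_inv in H. lra. }
  assert (Hvb : v <= - / INR (S J)).
  { rewrite S_INR. assert (/ (INR J + 1) < / / (- v)) by (apply Rinv_lt_contravar; nra).
    rewrite Rinv_inv in H. lra. }
  destruct gen_xside as ([HA0 HA] & [Ha0 Ha] & HE01).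
  destruct (gen_yside J v y ltac:(lia) Hva Hvb Hy Hy01) as ([HB0 HB] & [Hb0 Hb]).
  set (e := epsn m) in *. set (N := dg x m) in *.
  assert (He : e = 1 \/ e = -1) by apply epsn_cases.
  pose proof (Q_ge1 m). pose proof (Qm_nonneg m). pose proof (Qm_le m).
  destruct (u_facts m) as (_ & _ & HN1 & _). fold N in HN1.
  assert (HN1' : 1 <= INR N) by (apply (le_INR 1); lia).
  set (a := 1 / (Q x m * (Q x m * INR N + Qm x m))) in *.
  set (b := 1 / (Q x m * (Q x m * INR J - Qm x m))) in *.
  set (A := gM m * al m ^ N) in *. set (B := gM m * (1 - al m) ^ (J - 1)) in *.
  assert (Q2 := quot_two (g x) (g y) (g (h x m 0)) x y (h x m 0) A B a b e He
     HA0 HA HB0 HB Ha0 Ha Hb0 Hb).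
  destruct (frac_two A B a b HA0 HB0 ltac:(lra) ltac:(lra)) as [F1 F2].
  eapply Rge_trans; [exact Q2|].
  assert (HM := gM_nonneg m). pose proof (al_bounds m). pose proof (al_isalpha m) as Hal.
  pose proof phi_bounds. pose proof (phi_pow_pos 6).
  unfold T. rewrite W_M_S. destruct (Q_S m) as [QS1 QS2]. rewrite QS1, QS2. fold N.
  assert (0 <= al m ^ (N - 1)) by (apply pow_le; lra).
  assert (EaN : al m ^ N = al m ^ (N - 1) * al m).
  { replace N with (S (N - 1)) at 1 by lia. rewrite <- tech_pow_Rmult. ring. }
  destruct (Rle_lt_dec b a) as [Cba|Cab].
  - eapply Rge_trans; [exact (F2 Cba)|].
    pose proof (ineqA _ Hal) as IA.
    unfold A, a. rewrite EaN.
    replace (gM m * (al m ^ (N - 1) * al m) / (2 * (1 / (Q x m * (Q x m * INR N + Qm x m)))))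
      with (gM m * al m ^ (N - 1) * (Q x m * (Q x m * INR N + Qm x m)) * (al m / 2)) by (field; nra).
    replace (gM m * al m ^ (N - 1) * (1 - al m) * (INR N * Q x m + Qm x m) * Q x m / phi ^ 6)
      with (gM m * al m ^ (N - 1) * (Q x m * (Q x m * INR N + Qm x m)) * ((1 - al m) / phi ^ 6)) by (field; lra).
    apply Rle_ge. apply Rmult_le_compat_l; [|lra].
    apply Rmult_le_pos; [apply Rmult_le_pos|]; nra.
  -
    assert (HJN : (J - 1 <= N)%nat).
    { assert (Q x m * INR J - Qm x m < Q x m * INR N + Qm x m).
      { unfold a, b in Cab. unfold Rdiv in Cab. rewrite !Rmult_1_l in Cab.
        assert (0 < Q x m * INR J - Qm x m) by nra.
        destruct (Rlt_le_dec (Q x m * INR J - Qm x m) (Q x m * INR N + Qm x m)) as [ok|bad]; auto.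
        exfalso. assert (/ (Q x m * (Q x m * INR J - Qm x m)) <= / (Q x m * (Q x m * INR N + Qm x m))).
        { apply Rinv_le_contravar; [nra|]. apply Rmult_le_compat_l; lra. }
        lra. }
      assert (INR J < INR N + 2) by nra.
      assert (HH : INR J < INR (N + 2)) by (rewrite plus_INR; simpl; lra).
      apply INR_lt in HH. lia. }
    eapply Rge_trans; [exact (frac_two' A B a b HA0 HB0 ltac:(lra) ltac:(lra) (Rlt_le _ _ Cab))|].
    assert (IG := ineqG2b (al m) (J - 1) N Hal ltac:(lia) HJN).
    assert (EJ : INR (J - 1) = INR J - 1) by (rewrite minus_INR by lia; simpl; ring).
    rewrite EJ in IG.
    assert (Hb' : b <= 1 / (Q x m * (Q x m * (INR J - 1)))).
    { unfold b, Rdiv. rewrite !Rmult_1_l. apply Rinv_le_contravar; nra. }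
    assert (Step : (A + B) / (2 * b) >= (al m ^ N + (1 - al m) ^ (J - 1)) * (INR J - 1) / 2 * (gM m * Q x m * Q x m)).
    { unfold A, B. apply Rle_ge. unfold Rdiv.
      apply Rle_trans with ((gM m * al m ^ N + gM m * (1 - al m) ^ (J - 1)) * / (2 * (1 / (Q x m * (Q x m * (INR J - 1)))))).
      - right. field. repeat split; nra.
      - apply Rmult_le_compat_l; [apply Rplus_le_le_0_compat; apply Rmult_le_pos; auto; apply pow_le; lra|]. apply Rinv_le_contravar; [|lra].
        apply Rmult_lt_0_compat; [lra|]. unfold b in Hb0. lra. }
    eapply Rge_trans; [exact Step|].
    apply Rle_ge.
    apply Rle_trans with (al m ^ (N - 1) * (1 - al m) * (INR N + 1) / phi ^ 6 * (gM m * Q x m * Q x m)).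
    + assert (0 <= al m ^ (N - 1) * (1 - al m)) by nra.
      assert (X1 : (INR N * Q x m + Qm x m) * Q x m <= (INR N + 1) * (Q x m * Q x m)) by nra.
      replace (gM m * al m ^ (N - 1) * (1 - al m) * (INR N * Q x m + Qm x m) * Q x m / phi ^ 6) with
        ((gM m * al m ^ (N - 1) * (1 - al m) / phi ^ 6) * ((INR N * Q x m + Qm x m) * Q x m)) by (field; lra).
      replace (al m ^ (N - 1) * (1 - al m) * (INR N + 1) / phi ^ 6 * (gM m * Q x m * Q x m)) with
        ((gM m * al m ^ (N - 1) * (1 - al m) / phi ^ 6) * ((INR N + 1) * (Q x m * Q x m))) by (field; lra).
      apply Rmult_le_compat_l; [|lra].
      unfold Rdiv. apply Rmult_le_pos; [nra|]. left. apply Rinv_0_lt_compat. lra.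
    + apply Rmult_le_compat_r; [|lra]. apply Rmult_le_pos; [apply Rmult_le_pos|]; lra.
Qed.

End Gen.

Lemma h_S' n z : 0 < INR (dg x n) + z -> h x (S n) z = h x n (/ (INR (dg x n) + z)).
Proof.
  intros Hz. pose proof (dg_bounds x Hx Hirr n) as [Ha _].
  unfold h, P, Pm, Q, Qm. rewrite pm_S, qm_S, pn_S, qn_S. rewrite !plus_INR, !mult_INR.
  fold (P x n) (Pm x n) (Q x n) (Qm x n).
  pose proof (Qm_nonneg n). pose proof (Q_ge1 n).
  field. split; try lra. nra.
Qed.

Lemma case2 n v y : (2 <= dg x n)%nat -> / INR (dg x n) < v -> v <= / (INR (dg x n) - 1) ->
  y = h x n v -> 0 <= y <= 1 ->
  (/ v - INR (dg x n) < - / 2 -> (g y - g x) / (y - x) >= T (S n)) /\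
  (- / 2 <= / v - INR (dg x n) -> (g y - g x) / (y - x) >= T (S (S n))).
Proof.
  intros HN Hv1 Hv2 Hy Hy01.
  set (N := dg x n) in *.
  assert (HN' : 2 <= INR N) by (apply (le_INR 2); lia).
  assert (Hv0 : 0 < v) by (eapply Rlt_trans; [|exact Hv1]; apply Rinv_0_lt_compat; lra).
  assert (Hiv : 0 < / v) by (apply Rinv_0_lt_compat; lra).
  set (z := / v - INR N).
  assert (Hz1 : -1 <= z).
  { unfold z. assert (/ / (INR N - 1) <= / v) by (apply Rinv_le_contravar; lra).
    rewrite Rinv_inv in H. lra. }
  assert (Hz2 : z < 0).
  { unfold z. assert (/ v < / / INR N) by (apply Rinv_lt_contravar; [apply Rmult_lt_0_compat; [apply Rinv_0_lt_compat; lra|lra]|lra]).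
    rewrite Rinv_inv in H. lra. }
  assert (Ey : y = h x (S n) z).
  { rewrite h_S' by (unfold z; fold N; lra). fold N. unfold z.
    replace (INR N + (/ v - INR N)) with (/ v) by ring. rewrite Rinv_inv. exact Hy. }
  set (pv := ((N - 1) * pn x n + pm x n)%nat). set (qv := ((N - 1) * qn x n + qm x n)%nat).
  destruct (q_facts x Hx Hirr n) as (Q1&Q2&Q3&Q4&_).
  assert (R1 : (pv + pm x (S n) = pn x (S n))%nat) by (unfold pv; rewrite pm_S, pn_S; fold N; nia).
  assert (R2 : (qv + qm x (S n) = qn x (S n))%nat) by (unfold qv; rewrite qm_S, qn_S; fold N; nia).
  assert (R3 : (pv <= qv)%nat) by (unfold pv, qv; nia).
  assert (R4 : (1 <= qv)%nat) by (unfold qv; nia).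
  split; intro C.
  - pose proof (gen_special (S n) pv qv ltac:(lia) R1 R2 R3 R4 z y Hz1 C Ey Hy01) as G.
    eapply Rge_trans; [exact G|]. unfold T. destruct (Q_S n) as [_ QS2]. rewrite QS2.
    assert (Hq : Q x n <= INR qv).
    { unfold Q. apply le_INR. unfold qv. nia. }
    pose proof (gM_nonneg (S n)). pose proof (Q_ge1 (S n)). pose proof (Q_ge1 n).
    pose proof inv_phi6_small. pose proof (phi_pow_pos 6).
    apply Rle_ge. unfold Rdiv. 
    apply Rle_trans with (gM (S n) * Q x (S n) * Q x n * / 2).
    + apply Rmult_le_compat_l; [apply Rmult_le_pos; [apply Rmult_le_pos|]; lra|]. lra.
    + apply Rmult_le_compat; try lra.
      * apply Rmult_le_pos; [apply Rmult_le_pos|]; lra.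
      * apply Rmult_le_compat_l; [apply Rmult_le_pos|]; lra.
  - apply (gen_main (S n) pv qv ltac:(lia) R1 R2 R3 R4 z y C Hz2 Ey Hy01).
Qed.

Lemma case4 n v y : dg x (S n) = 1%nat -> 0 <= v -> v < / (INR (dg x n) + 1) ->
  y = h x n v -> 0 <= y <= 1 ->
  (v / (1 - INR (dg x n) * v) - 1 < - / 2 -> (g y - g x) / (y - x) >= T (S n)) /\
  (- / 2 <= v / (1 - INR (dg x n) * v) - 1 -> (g y - g x) / (y - x) >= T (S (S (S n)))).
Proof.
  intros H1 Hv0 Hv1 Hy Hy01.
  set (N := dg x n) in *.
  destruct (u_facts n) as (_ & _ & HN1 & _). fold N in HN1.
  assert (HN' : 1 <= INR N) by (apply (le_INR 1); lia).
  assert (Hv1' : v * (INR N + 1) < 1).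
  { apply (Rmult_lt_compat_r (INR N + 1)) in Hv1; [|lra]. rewrite Rinv_l in Hv1 by lra. lra. }
  assert (Hd : 0 < 1 - INR N * v) by nra.
  set (z := v / (1 - INR N * v) - 1).
  assert (Hz1 : -1 <= z).
  { unfold z. assert (0 <= v / (1 - INR N * v)) by (unfold Rdiv; apply Rmult_le_pos; [lra|left; apply Rinv_0_lt_compat; lra]). lra. }
  assert (Hz2 : z < 0).
  { unfold z. assert (v / (1 - INR N * v) < 1).
    { apply (Rmult_lt_reg_r (1 - INR N * v)); auto. unfold Rdiv. rewrite Rmult_assoc, Rinv_l by lra. lra. }
    lra. }
  assert (Ey : y = h x (S (S n)) z).
  { rewrite Hy. unfold h, P, Pm, Q, Qm. repeat rewrite ?pm_S, ?qm_S, ?pn_S, ?qn_S. rewrite H1.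
    repeat rewrite ?plus_INR, ?mult_INR. fold N. fold (P x n) (Pm x n) (Q x n) (Qm x n).
    simpl (INR 1).
    pose proof (Qm_nonneg n). pose proof (Q_ge1 n).
    unfold z. field. repeat split; try lra.
    intro Hc. assert (Q x n + Qm x n * v > 0) by nra.
    assert ((INR N * Q x n + Qm x n + Q x n) * (1 - INR N * v) +
      (INR N * Q x n + Qm x n) * (v - (1 - INR N * v)) = Q x n + Qm x n * v) by ring. lra. }
  set (pv := pn x n). set (qv := qn x n).
  destruct (q_facts x Hx Hirr n) as (Q1&Q2&Q3&Q4&_).
  assert (R1 : (pv + pm x (S (S n)) = pn x (S (S n)))%nat) by (unfold pv; repeat rewrite ?pm_S, ?pn_S; rewrite H1; lia).
  assert (R2 : (qv + qm x (S (S n)) = qn x (S (S n)))%nat) by (unfold qv; repeat rewrite ?qm_S, ?qn_S; rewrite H1; lia).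
  assert (R3 : (pv <= qv)%nat) by (unfold pv, qv; lia).
  assert (R4 : (1 <= qv)%nat) by (unfold qv; lia).
  split; intro C.
  - pose proof (gen_special (S (S n)) pv qv ltac:(lia) R1 R2 R3 R4 z y Hz1 C Ey Hy01) as G.
    eapply Rge_trans; [exact G|]. unfold T.
    rewrite (W_M_S (S n)), H1. replace (al (S n) ^ (1 - 1)) with 1 by (simpl; ring).
    destruct (Q_S (S n)) as [QS1 _]. rewrite QS1, H1. destruct (Q_S n) as [_ QS3]. rewrite QS3.
    unfold qv. fold (Q x n). simpl (INR 1).
    pose proof (isalpha_bounds _ (al_isalpha (S n))) as [_ [Hb1 Hb2]].
    pose proof r2_val. pose proof inv_phi6_small. pose proof (phi_pow_pos 6).
    pose proof (gM_nonneg (S n)). pose proof (Q_ge1 (S n)). pose proof (Q_ge1 n).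
    set (K := gM (S n) * Q x (S n) * Q x n).
    assert (HK : 0 <= K) by (unfold K; apply Rmult_le_pos; [apply Rmult_le_pos|]; lra).
    apply Rle_ge. unfold Rdiv.
    apply Rle_trans with (K * (r2 * / 2)).
    + apply Rmult_le_compat_l; auto. lra.
    + unfold K.
      assert (Y1 : Q x (S n) <= 1 * Q x (S n) + Q x n) by lra.
      assert (Y2 : 0 <= gM (S n) * 1 * (1 - al (S n))) by (apply Rmult_le_pos; lra).
      assert (Y3 : gM (S n) * r2 <= gM (S n) * 1 * (1 - al (S n))) by (rewrite Rmult_1_r; apply Rmult_le_compat_l; lra).
      apply Rle_trans with (gM (S n) * 1 * (1 - al (S n)) * Q x (S n) * Q x n * / 2).
      * replace (gM (S n) * Q x (S n) * Q x n * (r2 * / 2)) with ((gM (S n) * r2) * (Q x (S n) * Q x n * / 2)) by ring.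
        replace (gM (S n) * 1 * (1 - al (S n)) * Q x (S n) * Q x n * / 2) with ((gM (S n) * 1 * (1 - al (S n))) * (Q x (S n) * Q x n * / 2)) by ring.
        apply Rmult_le_compat_r; [|lra]. apply Rmult_le_pos; [nra|lra].
      * apply Rmult_le_compat_r; [lra|]. apply Rmult_le_compat_r; [lra|].
        apply Rmult_le_compat_l; lra.
  - apply (gen_main (S (S n)) pv qv ltac:(lia) R1 R2 R3 R4 z y C Hz2 Ey Hy01).
Qed.

End Core.

End P4.
Import P4.

Module P6.

Definition GH (lam : R) (g : R -> R) : Prop :=
  (0 < lam < 1) /\ isalpha lam /\ g 0 = 0 /\ g 1 = 1 /\
  (forall p q r s : nat, (0 < q)%nat -> (0 < s)%nat -> (r <= s)%nat ->
     (r * q = p * s + 1)%nat ->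
     g (INR (p + r) / INR (q + s)) =
       (1 - lam) * g (INR p / INR q) + lam * g (INR r / INR s)) /\
  (forall y, 0 <= y <= 1 -> forall eps, 0 < eps -> exists d, 0 < d /\
     forall z, 0 <= z <= 1 -> Rabs (z - y) < d -> Rabs (g z - g y) < eps).

Lemma largest (Pr : nat -> Prop) B : Pr 0%nat -> ~ Pr B -> exists n, Pr n /\ ~ Pr (S n).
Proof.
  induction B; intros H0 HB; [contradiction|].
  destruct (classic (Pr B)) as [HP|HP].
  - exists B. auto.
  - apply IHB; auto.
Qed.

Section Top.
Variable x : R.
Hypothesis Hx : 0 < x < 1.
Hypothesis Hirr : irrational x.

Definition inI n y := exists v, 0 <= v <= 1 /\ y = h x n v.

Lemma h0_id w : h x 0 w = w.
Proof. unfold h, P, Pm, Q, Qm. rewrite pn0, pm0, qn0, qm0. simpl. field. Qed.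

Lemma inI_close n y : inI n y -> Rabs (y - x) <= / Q x n.
Proof.
  intros (v & Hv & Hy).
  pose proof (u_pos x Hx Hirr n). pose proof (u_lt1 x Hx Hirr n).
  assert (Exy : y - x = h x n v - h x n (u x n)) by (rewrite Hy; f_equal; apply x_h; auto).
  rewrite Exy.
  assert (Q1 : 1 <= Q x n) by (unfold Q; destruct (q_facts x Hx Hirr n) as (A&_); apply (le_INR 1); lia).
  assert (Qm0 : 0 <= Qm x n) by (unfold Qm; apply pos_INR).
  assert (D1 : 0 < Q x n + Qm x n * v) by nra.
  assert (D2 : 0 < Q x n + Qm x n * u x n) by nra.
  rewrite h_diff by lra.
  assert (He : epsn n = 1 \/ epsn n = -1) by (unfold epsn; destruct (Nat.even n); auto).
  assert (0 <= Qm x n * u x n) by nra. assert (0 <= Qm x n * v) by nra.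
  assert (Hd : Q x n <= (Q x n + Qm x n * u x n) * (Q x n + Qm x n * v)) by nra.
  assert (Hab : Rabs (v - u x n) <= 1) by (apply Rabs_le; lra).
  unfold Rdiv. rewrite Rabs_mult, Rabs_mult, Rabs_inv.
  rewrite (Rabs_pos_eq ((Q x n + Qm x n * u x n) * (Q x n + Qm x n * v))) by nra.
  assert (Hea : Rabs (epsn n) = 1) by (destruct He as [-> | ->]; [apply Rabs_R1|rewrite Rabs_left by lra; ring]).
  rewrite Hea, Rmult_1_l.
  apply Rle_trans with (1 * / ((Q x n + Qm x n * u x n) * (Q x n + Qm x n * v))).
  - apply Rmult_le_compat_r; [left; apply Rinv_0_lt_compat; nra|lra].
  - rewrite Rmult_1_l. apply Rinv_le_contravar; lra.
Qed.

Lemma Q_ge_n n : INR n <= Q x n.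
Proof. unfold Q. destruct (q_facts x Hx Hirr n) as (_&_&_&_&A&_). apply le_INR; lia. Qed.

Theorem core : exists eta, 0 < eta /\ forall delta, delta <> 0 -> Rabs delta < eta ->
  exists t, (1 <= t)%nat /\ forall lam g, GH lam g ->
    (g (x + delta) - g x) / delta >= T g x t.
Proof.
  exists (Rmin x (1 - x)). split; [apply Rmin_glb_lt; lra|].
  intros delta Hd0 Hd.
  assert (Hm1 : Rmin x (1 - x) <= x) by apply Rmin_l.
  assert (Hm2 : Rmin x (1 - x) <= 1 - x) by apply Rmin_r.
  set (y := x + delta).
  assert (Hy01 : 0 < y < 1) by (unfold y; apply Rabs_def2 in Hd; lra).
  assert (Hyd : y - x = delta) by (unfold y; ring).
  assert (Had : 0 < Rabs delta) by (apply Rabs_pos_lt; auto).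
  destruct (archimed (/ Rabs delta)) as [Hup _].
  set (B := S (Z.to_nat (up (/ Rabs delta)))).
  assert (HB : / Rabs delta < INR B).
  { unfold B. rewrite S_INR. destruct (Z_lt_le_dec (up (/ Rabs delta)) 0) as [C|C].
    - apply IZR_lt in C. assert (0 < / Rabs delta) by (apply Rinv_0_lt_compat; lra).
      pose proof (pos_INR (Z.to_nat (up (/ Rabs delta)))). lra.
    - rewrite INR_IZR_INZ, Z2Nat.id by auto. lra. }
  assert (H0 : inI 0 y) by (exists y; split; [lra|]; rewrite h0_id; auto).
  assert (HnB : ~ inI B y).
  { intro HI. apply inI_close in HI. pose proof (Q_ge_n B).
    assert (0 < INR B) by (pose proof (Rinv_0_lt_compat _ Had); lra).
    assert (/ Q x B <= / INR B) by (apply Rinv_le_contravar; lra).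
    assert (/ INR B < Rabs delta).
    { rewrite <- (Rinv_inv (Rabs delta)). apply Rinv_lt_contravar; auto.
      apply Rmult_lt_0_compat; auto. apply Rinv_0_lt_compat; auto. }
    rewrite Hyd in HI. lra. }
  destruct (largest (fun n => inI n y) B H0 HnB) as (n & (v & Hv & Hyv) & Hn).
  destruct (u_facts x Hx Hirr n) as (_ & _ & HN1 & _).
  set (N := dg x n) in *.
  assert (HN1' : 1 <= INR N) by (apply (le_INR 1); lia).
  assert (Hy01' : 0 <= y <= 1) by lra.
  assert (Hout : v < / (INR N + 1) \/ / INR N < v).
  { destruct (Rlt_le_dec v (/ (INR N + 1))) as [C1|C1]; [left; auto|].
    destruct (Rlt_le_dec (/ INR N) v) as [C2|C2]; [right; auto|].
    exfalso. apply Hn.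
    assert (Hv0 : 0 < v) by (eapply Rlt_le_trans; [|exact C1]; apply Rinv_0_lt_compat; lra).
    exists (/ v - INR N). split.
    - split.
      + assert (/ / INR N <= / v) by (apply Rinv_le_contravar; lra). rewrite Rinv_inv in H. lra.
      + assert (/ v <= / / (INR N + 1)) by (apply Rinv_le_contravar; [apply Rinv_0_lt_compat; lra|lra]).
        rewrite Rinv_inv in H. lra.
    - assert (0 <= / v - INR N).
      { assert (/ / INR N <= / v) by (apply Rinv_le_contravar; lra). rewrite Rinv_inv in H. lra. }
      rewrite (h_S x Hx Hirr n) by auto. fold N.
      replace (INR N + (/ v - INR N)) with (/ v) by ring. rewrite Rinv_inv. auto. }
  assert (Hq : forall g : R -> R, (g (x + delta) - g x) / delta = (g y - g x) / (y - x)).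
  { intros. rewrite Hyd. reflexivity. }
  destruct Hout as [Hlow|Hhigh].
  -
    destruct (u_facts x Hx Hirr (S n)) as (_ & _ & HN2 & _).
    destruct (le_lt_dec 2 (dg x (S n))) as [C|C].
    + exists (S n). split; [lia|]. intros lam g (G1&G2&G3&G4&G5&G6). rewrite Hq.
      apply (case3 lam g G1 G2 G3 G4 G5 G6 x Hx Hirr n v y); auto; lra.
    + assert (E1 : dg x (S n) = 1%nat) by lia.
      set (z := v / (1 - INR N * v) - 1).
      destruct (Rlt_le_dec z (- / 2)) as [Cz|Cz].
      * exists (S n). split; [lia|]. intros lam g (G1&G2&G3&G4&G5&G6). rewrite Hq.
        apply (case4 lam g G1 G2 G3 G4 G5 G6 x Hx Hirr n v y E1 ltac:(lra) Hlow Hyv Hy01'); auto.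
      * exists (S (S (S n))). split; [lia|]. intros lam g (G1&G2&G3&G4&G5&G6). rewrite Hq.
        apply (case4 lam g G1 G2 G3 G4 G5 G6 x Hx Hirr n v y E1 ltac:(lra) Hlow Hyv Hy01'); auto.
  -
    assert (Hv0 : 0 < v) by (eapply Rlt_trans; [|exact Hhigh]; apply Rinv_0_lt_compat; lra).
    assert (Hiv : 1 <= / v) by (rewrite <- Rinv_1; apply Rinv_le_contravar; lra).
    destruct (floor_nat (/ v) Hiv) as (k & Hk & Hk1 & Hk2).
    assert (Hkv1 : / (INR k + 1) < v).
    { assert (/ (INR k + 1) < / / v) by (apply Rinv_lt_contravar; [apply Rmult_lt_0_compat; lra|lra]).
      rewrite Rinv_inv in H. auto. }
    assert (HkR : 1 <= INR k) by (apply (le_INR 1); lia).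
    assert (Hkv2 : v <= / INR k).
    { assert (/ / v <= / INR k) by (apply Rinv_le_contravar; lra). rewrite Rinv_inv in H. auto. }
    assert (HkN : (k < N)%nat).
    { assert (/ v < / / INR N) by (apply Rinv_lt_contravar; [apply Rmult_lt_0_compat; [apply Rinv_0_lt_compat; lra|lra]|lra]).
      rewrite Rinv_inv in H. apply INR_lt. lra. }
    destruct (le_lt_dec (k + 2) N) as [C|C].
    + exists (S n). split; [lia|]. intros lam g (G1&G2&G3&G4&G5&G6). rewrite Hq.
      apply (case1 lam g G1 G2 G3 G4 G5 G6 x Hx Hirr n k v y); auto.
    + assert (Ek : k = (N - 1)%nat) by lia.
      assert (HN2 : (2 <= N)%nat) by lia.
      assert (Hv2 : v <= / (INR N - 1)).
      { replace (INR N - 1) with (INR k) by (rewrite Ek, minus_INR by lia; simpl; ring). auto. }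
      destruct (Rlt_le_dec (/ v - INR N) (- / 2)) as [Cz|Cz].
      * exists (S n). split; [lia|]. intros lam g (G1&G2&G3&G4&G5&G6). rewrite Hq.
        apply (case2 lam g G1 G2 G3 G4 G5 G6 x Hx Hirr n v y HN2 Hhigh Hv2 Hyv Hy01'); auto.
      * exists (S (S n)). split; [lia|]. intros lam g (G1&G2&G3&G4&G5&G6). rewrite Hq.
        apply (case2 lam g G1 G2 G3 G4 G5 G6 x Hx Hirr n v y HN2 Hhigh Hv2 Hyv Hy01'); auto.
Qed.

End Top.

End P6.
Import P6.

Module P7.

Lemma GH_of_is_g lam g : is_g lam g -> 0 < lam < 1 -> isalpha lam -> GH lam g.
Proof. intros (A&B&C&D) H1 H2. repeat split; auto; apply H1. Qed.

Lemma r2_r1 : r2 = r1 ^ 2.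
Proof. rewrite r1_pow. reflexivity. Qed.

Section Fin.
Variable x : R.
Hypothesis Hx : 0 < x < 1.
Hypothesis Hirr : irrational x.

Lemma M0 g : GH r1 g \/ GH r2 g -> M g x 0 = 1.
Proof.
  intros Hg. unfold M. rewrite sigma0; [apply Rabs_R1| |]; destruct Hg as [(A&B&C&D&E&F)|(A&B&C&D&E&F)]; auto.
Qed.

Lemma M_phi g : GH r1 g -> forall n, M g x n = r1 ^ (S_phi x n + (if Nat.odd n then 1 else 0)).
Proof.
  intros Hg. pose proof Hg as (A&B&C&D&E&F). induction n.
  - simpl. apply M0; auto.
  - rewrite (M_S r1 g A E x Hx Hirr n). rewrite IHn.
    pose proof (dg_bounds x Hx Hirr n) as [Ha _].
    simpl S_phi. change (cf_digit x (S n)) with (dg x n).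
    rewrite Nat.odd_succ. unfold alpha.
    assert (r1c : 1 - r1 = r2) by (pose proof r_sum; lra).
    rewrite <- Nat.negb_odd. destruct (Nat.odd n) eqn:En; simpl.
    + replace (1 - (1 - r1)) with r1 by ring. rewrite r1c, r2_r1.
      rewrite <- pow_mult. replace (r1 ^ (S_phi x n + 1) * r1 ^ (2 * (dg x n - 1)) * r1) with
        (r1 ^ (S_phi x n + 1) * r1 ^ (2 * (dg x n - 1)) * r1 ^ 1) by ring.
      rewrite <- !pow_add. f_equal. lia.
    + rewrite r1c, r2_r1. rewrite <- !pow_add. f_equal. lia.
Qed.

Lemma M_tau g : GH r2 g -> forall n, M g x n * (if Nat.odd n then r1 else 1) = r1 ^ (S_tau x n).
Proof.
  intros Hg. pose proof Hg as (A&B&C&D&E&F). induction n.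
  - simpl. rewrite M0 by auto. ring.
  - rewrite (M_S r2 g A E x Hx Hirr n).
    pose proof (dg_bounds x Hx Hirr n) as [Ha _].
    simpl S_tau. change (cf_digit x (S n)) with (dg x n).
    rewrite Nat.odd_succ. unfold alpha.
    assert (r2c : 1 - r2 = r1) by (pose proof r_sum; lra).
    rewrite <- Nat.negb_odd in *. destruct (Nat.odd n) eqn:En; simpl in *.
    +
      rewrite r2c. replace (1 - r1) with r2 by (pose proof r_sum; lra). rewrite r2_r1.
      replace (M g x n * r1 ^ (dg x n - 1) * r1 ^ 2 * 1) with ((M g x n * r1) * r1 ^ (dg x n - 1 + 1)).
      * rewrite IHn, <- pow_add. f_equal. lia.
      * rewrite pow_add. simpl. ring.
    + rewrite Rmult_1_r in IHn. rewrite r2c, IHn, r2_r1.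
      rewrite <- pow_mult. replace (r1 ^ (S_tau x n) * r1 ^ (2 * (dg x n - 1)) * r1 * r1) with
        (r1 ^ (S_tau x n) * r1 ^ (2 * (dg x n - 1)) * r1 ^ 2) by (simpl; ring).
      rewrite <- !pow_add. f_equal. lia.
Qed.

Lemma T_phi g t : GH r1 g -> (1 <= t)%nat ->
  T g x t >= INR (cf_q x t * cf_q x (t - 1)) / phi ^ (S_phi x t + 7).
Proof.
  intros Hg Ht. destruct t; [lia|].
  rewrite cf_q_pred, cf_q_eq, mult_INR. fold (Q x (S t)) (Qm x (S t)).
  unfold T, gM. rewrite (M_phi g Hg).
  pose proof r1_val. pose proof phi_bounds.
  assert (HQ : 0 <= Q x (S t) * Qm x (S t)) by (unfold Q, Qm; apply Rmult_le_pos; apply pos_INR).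
  set (s := S_phi x (S t)).
  assert (Hp : r1 ^ (s + 1) <= r1 ^ (s + (if Nat.odd (S t) then 1 else 0))).
  { destruct (Nat.odd (S t)); [lra|].
    rewrite Nat.add_0_r, pow_add, pow_1. assert (0 <= r1 ^ s) by (apply pow_le; lra). nra. }
  rewrite r1_pow in Hp.
  assert (E : / phi ^ (s + 7) = / phi ^ (s + 1) * / phi ^ 6).
  { rewrite <- Rinv_mult, <- pow_add. f_equal. f_equal. lia. }
  apply Rle_ge.
  apply Rle_trans with (/ phi ^ (s + 1) * (Q x (S t) * Qm x (S t)) / phi ^ 6).
  - right. unfold Rdiv. rewrite E. ring.
  - unfold Rdiv. rewrite !Rmult_assoc. apply Rmult_le_compat_r.
    + rewrite <- Rmult_assoc. apply Rmult_le_pos; auto. left. apply Rinv_0_lt_compat, phi_pow_pos.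
    + lra.
Qed.

Lemma T_tau g t : GH r2 g -> (1 <= t)%nat ->
  T g x t >= INR (cf_q x t * cf_q x (t - 1)) / phi ^ (S_tau x t + 9).
Proof.
  intros Hg Ht. destruct t; [lia|].
  rewrite cf_q_pred, cf_q_eq, mult_INR. fold (Q x (S t)) (Qm x (S t)).
  unfold T, gM.
  pose proof r1_val. pose proof phi_bounds.
  assert (HQ : 0 <= Q x (S t) * Qm x (S t)) by (unfold Q, Qm; apply Rmult_le_pos; apply pos_INR).
  set (s := S_tau x (S t)).
  assert (HM : 0 <= M g x (S t)) by (unfold M; apply Rabs_pos).
  assert (Hp : / phi ^ s <= M g x (S t)).
  { rewrite <- r1_pow. unfold s. rewrite <- (M_tau g Hg (S t)).
    destruct (Nat.odd (S t)); nra. }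
  assert (E : / phi ^ (s + 9) <= / phi ^ s * / phi ^ 6).
  { rewrite <- Rinv_mult, <- pow_add. apply Rinv_le_contravar. apply phi_pow_pos.
    replace (s + 9)%nat with ((s + 6) + 3)%nat by lia. rewrite (pow_add _ (s+6) 3).
    assert (1 <= phi ^ 3) by (apply pow_R1_Rle; lra). pose proof (phi_pow_pos (s+6)). nra. }
  apply Rle_ge. unfold Rdiv.
  apply Rle_trans with (Q x (S t) * Qm x (S t) * (/ phi ^ s * / phi ^ 6)).
  - apply Rmult_le_compat_l; auto.
  - assert (0 < / phi ^ 6) by (apply Rinv_0_lt_compat, phi_pow_pos).
    assert (X : / phi ^ s * (Q x (S t) * Qm x (S t)) <= M g x (S t) * (Q x (S t) * Qm x (S t))) by (apply Rmult_le_compat_r; auto).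
    nra.
Qed.
End Fin.


End P7.
Import P7.

Theorem lemma2 (g_phi g_tau : R -> R) :
  is_g (/ phi) g_phi -> is_g tau g_tau ->
  forall x : R, 0 < x < 1 -> irrational x ->
  exists eta : R, 0 < eta /\
    forall delta : R, delta <> 0 -> Rabs delta < eta ->
    exists t : nat, (1 <= t)%nat /\
      (g_phi (x + delta) - g_phi x) / delta >=
        INR (cf_q x t * cf_q x (t - 1)) / phi ^ (S_phi x t + 7) /\
      (g_tau (x + delta) - g_tau x) / delta >=
        INR (cf_q x t * cf_q x (t - 1)) / phi ^ (S_tau x t + 9).
Proof.
  intros Hgp Hgt x Hx Hirr.
  pose proof r1_val. pose proof r2_val. pose proof r_sum.
  assert (G1 : GH r1 g_phi).
  { apply GH_of_is_g; [exact Hgp|lra|]. left. split; [reflexivity|lra]. }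
  assert (G2 : GH r2 g_tau).
  { apply GH_of_is_g; [exact Hgt|lra|]. right. split; [reflexivity|lra]. }
  destruct (core x Hx Hirr) as (eta & Heta & Hcore).
  exists eta. split; auto. intros delta Hd Hde.
  destruct (Hcore delta Hd Hde) as (t & Ht & Hall).
  exists t. split; auto. split.
  - eapply Rge_trans; [apply (Hall r1 g_phi G1)|]. apply T_phi; auto.
  - eapply Rge_trans; [apply (Hall r2 g_tau G2)|]. apply T_tau; auto.
Qed.
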